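(* Let $\alpha\in\mathbb{R}$, $\beta\ge 0$, and let $M_n=\sum_{i=1}^n\sigma(i)$ be the magnetization under the one-dimensional Ising measure $\mathbb{I}_{\alpha,\beta}$ on $\{\pm1\}^{\{1,\dots,n\}}$. Set $$\overline{m}=\frac{e^{\beta}\sinh\alpha}{\sqrt{e^{2\beta}\sinh^2\alpha+e^{-2\beta}}},\qquad t_n=n^{1/3}\,\frac{e^{-\beta}\cosh\alpha}{(e^{2\beta}\sinh^2\alpha+e^{-2\beta})^{3/2}},$$ $$\psi(z)=\exp\!\left(-\frac{2e^{\beta}\sinh^3\alpha+(3e^{\beta}-e^{-3\beta})\sinh\alpha}{6\,(e^{2\beta}\sinh^2\alpha+e^{-2\beta})^{5/2}}\,z^3\right).$$ Then $X_n=\frac{M_n-n\overline{m}}{n^{1/3}}$ converges in the complex mod-Gaussian sense with parameters $t_n$ and limiting function $\psi$, i.e. $$\mathbb{E}_{\alpha,\beta}\!\left[e^{zX_n}\right]e^{-t_n z^2/2}\longrightarrow \psi(z)$$ locally uniformly for $z$ in compact subsets of $\mathbb{C}$.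
   Context: The Ising measure $\mathbb{I}_{\alpha,\beta}$ on spin configurations $\sigma:\{1,\dots,n\}\to\{\pm1\}$ gives to $\sigma$ probability proportional to $\exp\big(\alpha\sum_{i=1}^n\sigma(i)+\beta\sum_{i=1}^{n-1}\sigma(i)\sigma(i+1)\big)$. $\mathbb{E}_{\alpha,\beta}$ denotes expectation under this measure. *)

(* Defs.v *)
From Stdlib Require Import Reals List.
Import ListNotations.
Open Scope R_scope.

Definition Cx : Type := (R * R)%type.
Definition Cadd (z w : Cx) : Cx := (fst z + fst w, snd z + snd w).
Definition Copp (z : Cx) : Cx := (- fst z, - snd z).
Definition Csub (z w : Cx) : Cx := Cadd z (Copp w).
Definition Cmul (z w : Cx) : Cx :=
  (fst z * fst w - snd z * snd w, fst z * snd w + snd z * fst w).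
Definition Cscale (r : R) (z : Cx) : Cx := (r * fst z, r * snd z).
Definition C0 : Cx := (0, 0).
Definition Cnorm (z : Cx) : R := sqrt (fst z ^ 2 + snd z ^ 2).
Definition Cexp (z : Cx) : Cx := (exp (fst z) * cos (snd z), exp (fst z) * sin (snd z)).

(* a configuration is a list of length n; true = +1, false = -1 *)
Definition spin (b : bool) : R := if b then 1 else -1.

Fixpoint configs (n : nat) : list (list bool) :=
  match n with
  | O => [nil]
  | S k => map (cons true) (configs k) ++ map (cons false) (configs k)
  end.

Definition magn (s : list bool) : R := fold_right (fun b acc => spin b + acc) 0 s.

Fixpoint nbr (s : list bool) : R :=
  match s with
  | b1 :: ((b2 :: _) as t) => spin b1 * spin b2 + nbr t
  | _ => 0
  end.

Definition ising_weight (a b : R) (s : list bool) : R := exp (a * magn s + b * nbr s).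

Definition ising_Z (a b : R) (n : nat) : R :=
  fold_right Rplus 0 (map (ising_weight a b) (configs n)).

Definition ising_E (a b : R) (n : nat) (f : list bool -> Cx) : Cx :=
  Cscale (/ ising_Z a b n)
    (fold_right Cadd C0 (map (fun s => Cscale (ising_weight a b s) (f s)) (configs n))).

Definition Dab (a b : R) : R := exp (2 * b) * (sinh a) ^ 2 + exp (-2 * b).

Definition mbar (a b : R) : R := exp b * sinh a / sqrt (Dab a b).

Definition cube_root_n (n : nat) : R := Rpower (INR n) (1 / 3).

Definition t_n (a b : R) (n : nat) : R :=
  cube_root_n n * (exp (- b) * cosh a / Rpower (Dab a b) (3 / 2)).

Definition psi_coef (a b : R) : R :=
  (2 * exp b * (sinh a) ^ 3 + (3 * exp b - exp (-3 * b)) * sinh a)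
  / (6 * Rpower (Dab a b) (5 / 2)).

Definition psi (a b : R) (z : Cx) : Cx := Cexp (Cscale (- psi_coef a b) (Cmul z (Cmul z z))).

Definition X_n (a b : R) (n : nat) (s : list bool) : R :=
  (magn s - INR n * mbar a b) / cube_root_n n.

Definition modG_seq (a b : R) (n : nat) (z : Cx) : Cx :=
  Cmul (ising_E a b n (fun s => Cexp (Cscale (X_n a b n s) z)))
       (Cexp (Cscale (- t_n a b n / 2) (Cmul z z))).

(* Main.v *)
Require Import Defs.
From Stdlib Require Import Reals List Lra Lia Psatz.
From Coquelicot Require Import Coquelicot.
Open Scope R_scope.

Lemma ceq (z w : C) : fst z = fst w -> snd z = snd w -> z = w.
Proof. destruct z, w; simpl; intros; subst; reflexivity. Qed.

Definition ce (v : C) : C := Defs.Cexp v.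

Lemma ce_add (u v : C) : ce (u + v)%C = (ce u * ce v)%C.
Proof.
  destruct u as [x1 y1]; destruct v as [x2 y2]; unfold ce, Defs.Cexp; simpl.
  rewrite exp_plus, cos_plus, sin_plus. apply ceq; simpl; ring.
Qed.

Lemma ce0 : ce 0%C = 1%C.
Proof. unfold ce, Defs.Cexp; simpl. rewrite exp_0, cos_0, sin_0. apply ceq; simpl; ring. Qed.

Lemma ce_R (x : R) : ce (RtoC x) = RtoC (exp x).
Proof. unfold ce, Defs.Cexp, RtoC; simpl. rewrite cos_0, sin_0. apply ceq; simpl; ring. Qed.

Lemma Cmod_ce (v : C) : Cmod (ce v) = exp (fst v).
Proof.
  destruct v as [x y]; unfold ce, Defs.Cexp, Cmod; simpl.
  pose proof (sin2_cos2 y) as Hsc. unfold Rsqr in Hsc.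
  replace ((exp x * cos y * (exp x * cos y * 1) + exp x * sin y * (exp x * sin y * 1)))
    with (exp x * exp x * (sin y * sin y + cos y * cos y)) by ring. rewrite Hsc, Rmult_1_r.
  rewrite sqrt_square; auto. left; apply exp_pos.
Qed.

Lemma ce_opp (v : C) : (ce v * ce (- v))%C = 1%C.
Proof. rewrite <- ce_add. replace (v + - v)%C with (RtoC 0) by ring. apply ce0. Qed.

Lemma ce_neq0 (v : C) : ce v <> 0%C.
Proof. intro H. pose proof (Cmod_ce v). rewrite H, Cmod_0 in H0. pose proof (exp_pos (fst v)). lra. Qed.

Lemma fst_le_Cmod (v : C) : Rabs (fst v) <= Cmod v.
Proof. apply re_le_Cmod. Qed.
Lemma snd_le_Cmod (v : C) : Rabs (snd v) <= Cmod v.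
Proof. pose proof (Rmax_Cmod v). pose proof (Rmax_r (Rabs (fst v)) (Rabs (snd v))). lra. Qed.

Lemma Cmod_ce_le (v : C) : Cmod (ce v) <= exp (Cmod v).
Proof. rewrite Cmod_ce. apply exp_le_3 || idtac. 
  destruct (Rle_lt_or_eq_dec _ _ (Rle_trans _ _ _ (Rle_abs (fst v)) (fst_le_Cmod v))) as [h|h].
  left; apply exp_increasing; auto. rewrite h; lra. Qed.

Lemma Cmod_ce_ge (v : C) : exp (- Cmod v) <= Cmod (ce v).
Proof. rewrite Cmod_ce. pose proof (fst_le_Cmod v). pose proof (Rabs_maj2 (fst v)).
  destruct (Rle_lt_or_eq_dec (- Cmod v) (fst v)) as [h|h]. lra.
  left; apply exp_increasing; auto. rewrite h; lra. Qed.

Lemma vec_mvt (f1 f2 d1 d2 : R -> R) (t B : R) :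
  0 <= t -> (forall s, is_derive f1 s (d1 s)) -> (forall s, is_derive f2 s (d2 s)) ->
  f1 0 = 0 -> f2 0 = 0 -> (forall s, 0 <= s <= t -> Cmod (d1 s, d2 s) <= B) ->
  Cmod (f1 t, f2 t) <= B * t.
Proof.
  intros Ht H1 H2 F1 F2 HB.
  set (p := f1 t); set (q := f2 t).
  assert (Hd : forall x, is_derive (fun s => p * f1 s + q * f2 s) x (p * d1 x + q * d2 x)).
  { intros x. apply (is_derive_plus (fun s => p * f1 s) (fun s => q * f2 s));
    apply is_derive_scal; auto. }
  destruct (MVT_gen (fun s => p * f1 s + q * f2 s) 0 t (fun s => p * d1 s + q * d2 s)) as [c [Hc Heq]].
  - intros x _. apply Hd.
  - intros x _. apply continuity_pt_filterlim. apply (ex_derive_continuous (fun s => p * f1 s + q * f2 s)).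
    eexists; apply Hd.
  - rewrite Rmin_left in Hc by lra. rewrite Rmax_right in Hc by lra.
    simpl in Heq. rewrite F1, F2 in Heq.
    assert (Hcs : Rabs (p * d1 c + q * d2 c) <= Cmod (p, q) * Cmod (d1 c, d2 c)).
    { rewrite <- (Rabs_pos_eq (Cmod (p,q) * Cmod (d1 c, d2 c))) by (apply Rmult_le_pos; apply Cmod_ge_0).
      apply Rsqr_le_abs_0. unfold Cmod; simpl.
      rewrite Rsqr_mult, !Rsqr_sqrt by nra. unfold Rsqr. pose proof (pow2_ge_0 (p * d2 c - q * d1 c)). nra. }
    assert (Hm : Cmod (p,q) * Cmod (p,q) = p * p + q * q).
    { unfold Cmod; simpl. rewrite sqrt_sqrt by nra. ring. }
    pose proof (HB c Hc) as Hb. pose proof (Cmod_ge_0 (p,q)). pose proof (Cmod_ge_0 (d1 c, d2 c)).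
    assert (Cmod (p,q) * Cmod (p,q) <= Cmod (p,q) * (B * t)).
    { rewrite Hm. assert (Ee : p*p+q*q = (p * d1 c + q * d2 c) * (t - 0)).
      { rewrite <- Heq. unfold p, q. ring. }
      rewrite Ee, Rminus_0_r.
      pose proof (Rle_abs (p * d1 c + q * d2 c)).
      assert (Cmod (p, q) * Cmod (d1 c, d2 c) * t <= Cmod (p,q) * (B * t)).
      { rewrite Rmult_assoc. apply Rmult_le_compat_l; auto. apply Rmult_le_compat_r; auto. }
      nra. }
    destruct (Rle_lt_or_eq_dec 0 (Cmod (p,q)) H) as [hp|hp].
    + apply Rmult_le_reg_l with (Cmod (p,q)); auto.
    + rewrite <- hp. assert (0 <= B). { pose proof (Cmod_ge_0 (d1 c, d2 c)). lra. } nra.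
Qed.

Lemma taylor_step (k : nat) (x y : R) (f1 f2 g1 g2 : R -> R) :
  (forall s, is_derive f1 s (x * g1 s - y * g2 s)) ->
  (forall s, is_derive f2 s (x * g2 s + y * g1 s)) -> f1 0 = 0 -> f2 0 = 0 ->
  (forall s, 0 <= s <= 1 -> Cmod (g1 s, g2 s) <= (s * Cmod (x,y)) ^ k * exp (Cmod (x,y))) ->
  forall t, 0 <= t <= 1 -> Cmod (f1 t, f2 t) <= (t * Cmod (x,y)) ^ (S k) * exp (Cmod (x,y)).
Proof.
  intros D1 D2 F1 F2 Hg t Ht.
  pose proof (Cmod_ge_0 (x,y)) as Hv.
  replace ((t * Cmod (x,y)) ^ (S k) * exp (Cmod (x,y))) with
    ((Cmod (x,y) * ((t * Cmod (x,y)) ^ k * exp (Cmod (x,y)))) * t) by (simpl; ring).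
  apply vec_mvt with (d1 := fun s => x * g1 s - y * g2 s) (d2 := fun s => x * g2 s + y * g1 s); auto; try lra.
  intros s Hs.
  replace (x * g1 s - y * g2 s, x * g2 s + y * g1 s) with ((x,y) * (g1 s, g2 s))%C
    by (apply ceq; simpl; ring).
  rewrite Cmod_mult. apply Rmult_le_compat_l; auto.
  eapply Rle_trans. apply Hg; lra.
  apply Rmult_le_compat_r. left; apply exp_pos.
  apply pow_incr. split. apply Rmult_le_pos; lra. apply Rmult_le_compat_r; lra.
Qed.

Definition p0a x y t := exp (t*x) * cos (t*y).
Definition p0b x y t := exp (t*x) * sin (t*y).
Definition p1a x y t := p0a x y t - 1.
Definition p1b x y t := p0b x y t.
Definition p2a x y t := p1a x y t - t * x.
Definition p2b x y t := p1b x y t - t * y.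
Definition p3a x y t := p2a x y t - t*t*(x*x - y*y)/2.
Definition p3b x y t := p2b x y t - t*t*(x*y).
Definition p4a x y t := p3a x y t - t*t*t*(x*x*x - 3*x*y*y)/6.
Definition p4b x y t := p3b x y t - t*t*t*(3*x*x*y - y*y*y)/6.

Lemma bound0 x y s : 0 <= s <= 1 -> Cmod (p0a x y s, p0b x y s) <= (s * Cmod (x,y)) ^ 0 * exp (Cmod (x,y)).
Proof.
  intros Hs. replace (p0a x y s, p0b x y s) with (ce (s*x, s*y)) by reflexivity.
  rewrite Cmod_ce. simpl. rewrite Rmult_1_l.
  pose proof (fst_le_Cmod (x,y)). simpl in H. pose proof (Rle_abs x). pose proof (Rabs_pos x).
  destruct (Rle_lt_or_eq_dec (s*x) (Cmod (x,y))). nra. left; apply exp_increasing; auto. rewrite e; lra.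
Qed.

Ltac dtac := intros; unfold p4a, p4b, p3a, p3b, p2a, p2b, p1a, p1b, p0a, p0b; auto_derive; auto; field.

Lemma bound4 x y t : 0 <= t <= 1 ->
  Cmod (p4a x y t, p4b x y t) <= (t * Cmod (x,y)) ^ 4 * exp (Cmod (x,y)).
Proof.
  assert (B1 : forall s, 0 <= s <= 1 -> Cmod (p1a x y s, p1b x y s) <= (s * Cmod (x,y)) ^ 1 * exp (Cmod (x,y))).
  { apply (taylor_step 0 x y _ _ (p0a x y) (p0b x y)); try dtac.
        unfold p1a, p0a; rewrite !Rmult_0_l, exp_0, cos_0; ring.
    unfold p1b, p0b; rewrite !Rmult_0_l, sin_0; ring. apply bound0. }
  assert (B2 : forall s, 0 <= s <= 1 -> Cmod (p2a x y s, p2b x y s) <= (s * Cmod (x,y)) ^ 2 * exp (Cmod (x,y))).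
  { apply (taylor_step 1 x y _ _ (p1a x y) (p1b x y)); try dtac; auto.
    unfold p2a, p1a, p0a; rewrite !Rmult_0_l, exp_0, cos_0; ring.
    unfold p2b, p1b, p0b; rewrite !Rmult_0_l, sin_0; ring. }
  assert (B3 : forall s, 0 <= s <= 1 -> Cmod (p3a x y s, p3b x y s) <= (s * Cmod (x,y)) ^ 3 * exp (Cmod (x,y))).
  { apply (taylor_step 2 x y _ _ (p2a x y) (p2b x y)); try dtac; auto.
    unfold p3a, p2a, p1a, p0a; rewrite !Rmult_0_l, exp_0, cos_0; field.
    unfold p3b, p2b, p1b, p0b; rewrite !Rmult_0_l, sin_0; ring. }
  apply (taylor_step 3 x y _ _ (p3a x y) (p3b x y)); try dtac; auto.
  unfold p4a, p3a, p2a, p1a, p0a; rewrite !Rmult_0_l, exp_0, cos_0; field.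
  unfold p4b, p3b, p2b, p1b, p0b; rewrite !Rmult_0_l, sin_0; field.
Qed.

Lemma bound1 x y t : 0 <= t <= 1 ->
  Cmod (p1a x y t, p1b x y t) <= (t * Cmod (x,y)) ^ 1 * exp (Cmod (x,y)).
Proof.
  apply (taylor_step 0 x y _ _ (p0a x y) (p0b x y)); try dtac.
  unfold p1a, p0a; rewrite !Rmult_0_l, exp_0, cos_0; ring.
  unfold p1b, p0b; rewrite !Rmult_0_l, sin_0; ring. apply bound0.
Qed.

Definition T3c (v : C) : C := (1 + v + v * v / 2 + v * v * v / 6)%C.

Lemma ce_taylor3 (v : C) : Cmod (ce v - T3c v)%C <= Cmod v ^ 4 * exp (Cmod v).
Proof.
  destruct v as [x y].
  replace (ce (x,y) - T3c (x,y))%C with (p4a x y 1, p4b x y 1).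
  - pose proof (bound4 x y 1). rewrite Rmult_1_l in H. apply H; lra.
  - unfold T3c, ce, Defs.Cexp, p4a, p4b, p3a, p3b, p2a, p2b, p1a, p1b, p0a, p0b.
    apply ceq; simpl; rewrite !Rmult_1_l; field.
Qed.

Lemma ce_taylor1 (v : C) : Cmod (ce v - 1)%C <= Cmod v * exp (Cmod v).
Proof.
  destruct v as [x y].
  replace (ce (x,y) - 1)%C with (p1a x y 1, p1b x y 1).
  - pose proof (bound1 x y 1). rewrite Rmult_1_l, pow_1 in H. apply H; lra.
  - unfold ce, Defs.Cexp, p1a, p1b, p0a, p0b. apply ceq; simpl; rewrite !Rmult_1_l; ring.
Qed.

Lemma Cmod_tri3 (a b c : C) : Cmod (a + b + c)%C <= Cmod a + Cmod b + Cmod c.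
Proof. eapply Rle_trans. apply Cmod_triangle. pose proof (Cmod_triangle a b). lra. Qed.

Lemma Cmod_sub (a b : C) : Cmod (a - b)%C <= Cmod a + Cmod b.
Proof. unfold Cminus. eapply Rle_trans. apply Cmod_triangle. rewrite Cmod_opp. lra. Qed.

Lemma Cmod_RtoC (x : R) : Cmod (RtoC x) = Rabs x.
Proof. apply Cmod_R. Qed.

Lemma Cmod_invR (x : R) : 0 < x -> Cmod (/ RtoC x)%C = / x.
Proof. intros. rewrite Cmod_inv, Cmod_RtoC, Rabs_pos_eq; try lra. intro Hc; injection Hc; lra. Qed.

Definition Tq (c1 c2 c3 : R) (h : C) : C :=
  (1 + c1 * h + (c2 + c1 * c1 / 2) * h * h + (c3 + c1 * c2 + c1 * c1 * c1 / 6) * h * h * h)%C.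

Definition Sq (c1 c2 c3 : R) := Rabs c1 + Rabs c2 + Rabs c3.
Definition Kq (c1 c2 c3 : R) := Sq c1 c2 c3 ^ 4 * exp (Sq c1 c2 c3) + 2 * Sq c1 c2 c3 ^ 2 + 2 * Sq c1 c2 c3 ^ 3.

Lemma Sq_ge0 c1 c2 c3 : 0 <= Sq c1 c2 c3.
Proof. unfold Sq. pose proof (Rabs_pos c1). pose proof (Rabs_pos c2). pose proof (Rabs_pos c3). lra. Qed.

Lemma polyv_bound (c1 c2 c3 : R) (h : C) : Cmod h <= 1 ->
  Cmod (c1 * h + c2 * h * h + c3 * h * h * h)%C <= Sq c1 c2 c3 * Cmod h.
Proof.
  intros Hh. pose proof (Cmod_ge_0 h).
  eapply Rle_trans. apply Cmod_tri3. rewrite !Cmod_mult, !Cmod_RtoC. unfold Sq.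
  pose proof (Rabs_pos c1). pose proof (Rabs_pos c2). pose proof (Rabs_pos c3).
  assert (Cmod h * Cmod h <= Cmod h) by nra.
  assert (Cmod h * Cmod h * Cmod h <= Cmod h) by nra.
  nra.
Qed.

Lemma expoly (c1 c2 c3 : R) (h : C) : Cmod h <= 1 ->
  Cmod (ce (c1 * h + c2 * h * h + c3 * h * h * h) - Tq c1 c2 c3 h)%C <= Kq c1 c2 c3 * Cmod h ^ 4.
Proof.
  intros Hh. pose proof (Cmod_ge_0 h) as H0.
  set (v := (c1 * h + c2 * h * h + c3 * h * h * h)%C).
  set (r := (c2 + c3 * h)%C).
  set (P := ((2 * c1 * c3 + r * r) / 2 + (3 * c1 * c1 * r + 3 * c1 * h * r * r + h * h * r * r * r) / 6)%C).
  assert (Hid : (ce v - Tq c1 c2 c3 h)%C = ((ce v - T3c v) + h * h * h * h * P)%C).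
  { unfold T3c, Tq, P, r, v. field. }
  rewrite Hid. eapply Rle_trans. apply Cmod_triangle.
  pose proof (Sq_ge0 c1 c2 c3) as HS.
  pose proof (polyv_bound c1 c2 c3 h Hh) as Hv. fold v in Hv.
  assert (A1 : Cmod (ce v - T3c v) <= Sq c1 c2 c3 ^ 4 * exp (Sq c1 c2 c3) * Cmod h ^ 4).
  { eapply Rle_trans. apply ce_taylor3.
    replace (Sq c1 c2 c3 ^ 4 * exp (Sq c1 c2 c3) * Cmod h ^ 4) with ((Sq c1 c2 c3 * Cmod h) ^ 4 * exp (Sq c1 c2 c3)) by ring.
    apply Rmult_le_compat. apply pow_le, Cmod_ge_0. left; apply exp_pos.
    apply pow_incr; split; auto; apply Cmod_ge_0.
    destruct (Rle_lt_or_eq_dec (Cmod v) (Sq c1 c2 c3)). nra. left; apply exp_increasing; auto. rewrite e; lra. }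
  assert (Hr : Cmod r <= Sq c1 c2 c3).
  { unfold r. eapply Rle_trans. apply Cmod_triangle. rewrite Cmod_mult, !Cmod_RtoC. unfold Sq.
    pose proof (Rabs_pos c1). pose proof (Rabs_pos c3). nra. }
  assert (A2 : Cmod P <= 2 * Sq c1 c2 c3 ^ 2 + 2 * Sq c1 c2 c3 ^ 3).
  { unfold P. set (S := Sq c1 c2 c3) in *. pose proof (Cmod_ge_0 r).
    assert (Rabs c1 <= S) by (unfold S, Sq; pose proof (Rabs_pos c2); pose proof (Rabs_pos c3); lra).
    assert (Rabs c3 <= S) by (unfold S, Sq; pose proof (Rabs_pos c2); pose proof (Rabs_pos c1); lra).
    pose proof (Rabs_pos c1). pose proof (Rabs_pos c3).
    eapply Rle_trans. apply Cmod_triangle.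
    unfold Cdiv. rewrite !Cmod_mult.
    rewrite !Cmod_invR by lra.
    assert (T1 : Cmod (2 * c1 * c3 + r * r)%C <= 3 * S ^ 2).
    { eapply Rle_trans. apply Cmod_triangle. rewrite !Cmod_mult, !Cmod_RtoC, Rabs_pos_eq by lra. nra. }
    assert (T2 : Cmod (3 * c1 * c1 * r + 3 * c1 * h * r * r + h * h * r * r * r)%C <= 7 * S ^ 3).
    { eapply Rle_trans. apply Cmod_tri3. rewrite !Cmod_mult, !Cmod_RtoC, Rabs_pos_eq by lra.
      assert (Cmod h * Cmod h <= 1) by nra.
      assert (Q1 : Rabs c1 * Rabs c1 <= S * S) by nra.
      assert (Rabs c1 * Rabs c1 * Cmod r <= S^3). { simpl. rewrite Rmult_1_r, <- Rmult_assoc. apply Rmult_le_compat; nra. }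
      assert (Q2 : Rabs c1 * Cmod h <= S) by nra.
      assert (Q3 : Cmod r * Cmod r <= S * S) by nra.
      assert (Rabs c1 * Cmod h * Cmod r * Cmod r <= S^3). { simpl. rewrite Rmult_1_r.
        replace (Rabs c1 * Cmod h * Cmod r * Cmod r) with ((Rabs c1 * Cmod h) * (Cmod r * Cmod r)) by ring.
        apply Rmult_le_compat; nra. }
      assert (Cmod h * Cmod h * Cmod r * Cmod r * Cmod r <= S^3). { simpl. rewrite Rmult_1_r.
        replace (Cmod h * Cmod h * Cmod r * Cmod r * Cmod r) with ((Cmod h * Cmod h) * ((Cmod r * Cmod r) * Cmod r)) by ring.
        replace (S * (S * S)) with (1 * ((S * S) * S)) by ring.
        apply Rmult_le_compat; try nra. }
      nra. }
    pose proof (Cmod_ge_0 (2 * c1 * c3 + r * r)%C). nra. }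
  assert (Cmod (h * h * h * h * P) <= (2 * Sq c1 c2 c3 ^ 2 + 2 * Sq c1 c2 c3 ^ 3) * Cmod h ^ 4).
  { rewrite !Cmod_mult. replace (Cmod h * Cmod h * Cmod h * Cmod h * Cmod P) with (Cmod P * Cmod h ^ 4) by ring. apply Rmult_le_compat_r; auto. apply pow_le; auto. }
  unfold Kq. lra.
Qed.

Section Par.
Variables a b : R.

Definition EE := exp b.
Definition sh := sinh a.
Definition ch := cosh a.
Definition DD := Dab a b.
Definition ss := sqrt DD.
Definition LL := EE * ch + ss.
Definition MM := EE * ch - ss.
Definition mm := mbar a b.
Definition sgm := exp (- b) * cosh a / Rpower DD (3/2).
Definition kap := - 6 * psi_coef a b.
Definition del := EE * EE - / EE * / EE.

Lemma EE_pos : 0 < EE. Proof. apply exp_pos. Qed.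
Lemma DD_eq : DD = EE * EE * sh * sh + / EE * / EE.
Proof. unfold DD, Dab, EE, sh. replace (2 * b) with (b + b) by ring.
  replace (-2 * b) with (- (b + b)) by ring. rewrite exp_Ropp, exp_plus. field. apply Rgt_not_eq, exp_pos. Qed.
Lemma DD_pos : 0 < DD.
Proof. rewrite DD_eq. pose proof EE_pos. assert (0 < / EE * / EE) by (apply Rmult_lt_0_compat; apply Rinv_0_lt_compat; auto).
  assert (0 <= EE * EE * sh * sh). { replace (EE * EE * sh * sh) with ((EE * sh) * (EE * sh)) by ring. apply Rle_0_sqr. } lra. Qed.
Lemma ss_pos : 0 < ss. Proof. apply sqrt_lt_R0, DD_pos. Qed.
Lemma ss_sq : ss * ss = DD. Proof. apply sqrt_sqrt. left; apply DD_pos. Qed.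
Lemma ch_sh : ch * ch = 1 + sh * sh.
Proof. unfold ch, sh, cosh, sinh. assert (exp a * exp (-a) = 1) by (rewrite <- exp_plus; replace (a + -a) with 0 by ring; apply exp_0).
  field_simplify. nra. Qed.
Lemma ch_pos : 0 < ch. Proof. unfold ch, cosh. pose proof (exp_pos a). pose proof (exp_pos (-a)). lra. Qed.
Lemma ea_eq : exp a = ch + sh. Proof. unfold ch, sh, cosh, sinh. field. Qed.
Lemma ema_eq : exp (- a) = ch - sh. Proof. unfold ch, sh, cosh, sinh. field. Qed.

Ltac nz := repeat split; apply Rgt_not_eq; first [apply ss_pos | apply DD_pos | apply exp_pos | apply EE_pos | auto].

Ltac nz2 := repeat split; try apply Rgt_not_eq; unfold Rgt; try assumption; try apply EE_pos; try apply ss_pos; try apply DD_pos; try apply exp_pos; try lra; try (pose proof (Rle_0_sqr (EE*sh)); pose proof EE_pos; unfold Rsqr in *; nra).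

Lemma Rpow32 : Rpower DD (3/2) = DD * ss.
Proof. replace (3/2) with (1 + /2) by field. rewrite Rpower_plus, Rpower_1, Rpower_sqrt by apply DD_pos. reflexivity. Qed.
Lemma Rpow52 : Rpower DD (5/2) = DD * DD * ss.
Proof. replace (5/2) with (1 + (1 + /2)) by field. rewrite !Rpower_plus, Rpower_1, Rpower_sqrt by apply DD_pos. unfold ss; ring. Qed.

Lemma mm_eq : mm * ss = EE * sh.
Proof. unfold mm, mbar, ss, EE, sh, DD. field. apply Rgt_not_eq, ss_pos. Qed.
Lemma mm_sq : mm * mm = EE * EE * sh * sh / DD.
Proof. assert (mm = EE * sh / ss). { rewrite <- mm_eq. field. apply Rgt_not_eq, ss_pos. }
  rewrite H, <- ss_sq. field. apply Rgt_not_eq, ss_pos. Qed.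
Lemma sgm_eq : sgm = ch / (EE * DD * ss).
Proof. unfold sgm. rewrite Rpow32, exp_Ropp. unfold ch, EE. field. nz. Qed.
Lemma kap_eq : kap = - (2 * EE * sh ^ 3 + (3 * EE - / (EE * EE * EE)) * sh) / (DD * DD * ss).
Proof. unfold kap, psi_coef. change (Dab a b) with DD. rewrite Rpow52. replace (-3 * b) with (- (b + b + b)) by ring.
  rewrite exp_Ropp, !exp_plus. unfold EE, sh. field. nz. Qed.

Lemma LM_del : LL * MM = del.
Proof. unfold LL, MM, del. replace ((EE * ch + ss) * (EE * ch - ss)) with (EE * EE * (ch * ch) - ss * ss) by ring.
  rewrite ch_sh, ss_sq, DD_eq. field. apply Rgt_not_eq, EE_pos. Qed.

Lemma I0 : LL + MM - EE * exp a - EE * exp (- a) = 0.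
Proof. rewrite ea_eq, ema_eq. unfold LL, MM. ring. Qed.
Lemma I1 : LL * mm - MM * mm - EE * exp a + EE * exp (- a) = 0.
Proof. rewrite ea_eq, ema_eq. unfold LL, MM.
  replace ((EE * ch + ss) * mm - (EE * ch - ss) * mm) with (2 * (mm * ss)) by ring. rewrite mm_eq. ring. Qed.
Lemma I2 : LL * (sgm / 2 + mm * mm / 2) + MM * (- (sgm / 2) + mm * mm / 2) - EE * exp a / 2 - EE * exp (- a) / 2 = 0.
Proof. rewrite ea_eq, ema_eq. unfold LL, MM.
  replace ((EE * ch + ss) * (sgm / 2 + mm * mm / 2) + (EE * ch - ss) * (- (sgm / 2) + mm * mm / 2) - EE * (ch + sh) / 2 -
    EE * (ch - sh) / 2) with (ss * sgm + EE * ch * (mm * mm) - EE * ch) by field.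
  rewrite mm_sq, sgm_eq, DD_eq. field. pose proof ss_pos; pose proof EE_pos. pose proof DD_pos. rewrite DD_eq in H1.
  nz2. Qed.
Lemma I3 : LL * (kap / 6 + mm * (sgm / 2) + mm * mm * mm / 6) + MM * (- (kap / 6) + - mm * - (sgm / 2) + - mm * - mm * - mm / 6)
   - EE * exp a / 6 + EE * exp (- a) / 6 = 0.
Proof. rewrite ea_eq, ema_eq. unfold LL, MM.
  replace (EE * ch + ss) with (ss + EE * ch) by ring.
  replace (EE * ch - ss) with (- ss + EE * ch) by ring.
  replace ((ss + EE * ch) * (kap / 6 + mm * (sgm / 2) + mm * mm * mm / 6) +
    (- ss + EE * ch) * (- (kap / 6) + - mm * - (sgm / 2) + - mm * - mm * - mm / 6) - EE * (ch + sh) / 6 + EE * (ch - sh) / 6)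
    with (ss * kap / 3 + (mm * ss) * (mm * mm) / 3 + EE * ch * (mm * ss) * sgm / ss - EE * sh / 3)
    by (field; apply Rgt_not_eq, ss_pos).
  rewrite mm_eq, mm_sq, sgm_eq, kap_eq.
  replace (EE * ch * (EE * sh) * (ch / (EE * DD * ss)) / ss) with (EE * (ch * ch) * sh / (DD * (ss * ss)))
    by (field; pose proof ss_pos; pose proof EE_pos; pose proof DD_pos; repeat split; apply Rgt_not_eq; auto).
  rewrite ch_sh, ss_sq. 
  replace (ss * (- (2 * EE * sh ^ 3 + (3 * EE - / (EE * EE * EE)) * sh) / (DD * DD * ss))) with
    (- (2 * EE * sh ^ 3 + (3 * EE - / (EE * EE * EE)) * sh) / (DD * DD)) by (field; pose proof ss_pos; pose proof DD_pos; nz2).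
  rewrite DD_eq. field. pose proof EE_pos. pose proof DD_pos. rewrite DD_eq in H0. nz2.
Qed.

End Par.

Section Q.
Variables a b : R.

Definition c1u := mm a b.
Definition c2u := sgm a b / 2.
Definition c3u := kap a b / 6.
Definition uC (h : C) : C := (RtoC c1u * h + RtoC c2u * h * h + RtoC c3u * h * h * h)%C.
Definition wC (h : C) : C := (RtoC (LL a b) * ce (uC h))%C.
Definition tau (h : C) : C := (RtoC (EE b) * (ce (RtoC a + h) + ce (- (RtoC a + h))))%C.
Definition Qw (h : C) : C := (wC h * wC h - tau h * wC h + RtoC (del b))%C.

Lemma tau_eq h : tau h = (RtoC (EE b * exp a) * ce h + RtoC (EE b * exp (- a)) * ce (- h))%C.
Proof. unfold tau. replace (- (RtoC a + h))%C with (RtoC (- a) + - h)%C by (apply ceq; simpl; ring).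
  rewrite !ce_add, !ce_R, !RtoC_mult. ring. Qed.

Lemma bracket0 (h : C) :
  (RtoC (LL a b) * Tq c1u c2u c3u h + RtoC (MM a b) * Tq (- c1u) (- c2u) (- c3u) h
   - RtoC (EE b * exp a) * Tq 1 0 0 h - RtoC (EE b * exp (- a)) * Tq (-1) 0 0 h)%C = RtoC 0.
Proof.
  pose proof (I0 a b) as J0. pose proof (I1 a b) as J1. pose proof (I2 a b) as J2. pose proof (I3 a b) as J3.
  unfold c1u, c2u, c3u. set (L := LL a b) in *. set (M := MM a b) in *. set (m := mm a b) in *.
  set (sg := sgm a b) in *. set (k := kap a b) in *. set (E := EE b) in *. set (A := exp a) in *. set (B := exp (- a)) in *.
  destruct h as [x y]. unfold Tq. apply ceq; simpl.
  - transitivity ((L + M - E * A - E * B) + (L * m - M * m - E * A + E * B) * x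
       + (L * (sg / 2 + m * m / 2) + M * (- (sg / 2) + m * m / 2) - E * A / 2 - E * B / 2) * (x * x - y * y)
       + (L * (k / 6 + m * (sg / 2) + m * m * m / 6) + M * (- (k / 6) + - m * - (sg / 2) + - m * - m * - m / 6)
          - E * A / 6 + E * B / 6) * (x * x * x - 3 * x * y * y)).
    + field.
    + rewrite J0, J1, J2, J3. ring.
  - transitivity ((L * m - M * m - E * A + E * B) * y
       + (L * (sg / 2 + m * m / 2) + M * (- (sg / 2) + m * m / 2) - E * A / 2 - E * B / 2) * (2 * x * y)
       + (L * (k / 6 + m * (sg / 2) + m * m * m / 6) + M * (- (k / 6) + - m * - (sg / 2) + - m * - m * - m / 6)
          - E * A / 6 + E * B / 6) * (3 * x * x * y - y * y * y)).
    + field.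
    + rewrite J1, J2, J3. ring.
Qed.

Definition Fh (h : C) : C := (RtoC (LL a b) * ce (uC h) + RtoC (MM a b) * ce (- uC h) - tau h)%C.

Lemma Qw_eq h : Qw h = (wC h * Fh h)%C.
Proof.
  unfold Qw, Fh, wC. pose proof (ce_opp (uC h)) as Ho. rewrite <- (LM_del a b), RtoC_mult.
  rewrite <- (Cmult_1_r (RtoC (LL a b) * RtoC (MM a b))), <- Ho. ring.
Qed.

Definition KF := Rabs (LL a b) * Kq c1u c2u c3u + Rabs (MM a b) * Kq (- c1u) (- c2u) (- c3u)
   + Rabs (EE b * exp a) * Kq 1 0 0 + Rabs (EE b * exp (- a)) * Kq (-1) 0 0.

Lemma Fh_bound h : Cmod h <= 1 -> Cmod (Fh h) <= KF * Cmod h ^ 4.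
Proof.
  intros Hh.
  assert (Hu : ce (- uC h) = ce (RtoC (- c1u) * h + RtoC (- c2u) * h * h + RtoC (- c3u) * h * h * h)%C).
  { f_equal. unfold uC. rewrite !RtoC_opp. ring. }
  assert (H1 : ce h = ce (RtoC 1 * h + RtoC 0 * h * h + RtoC 0 * h * h * h)%C).
  { f_equal. ring. }
  assert (H2 : ce (- h) = ce (RtoC (-1) * h + RtoC 0 * h * h + RtoC 0 * h * h * h)%C).
  { f_equal. apply ceq; simpl; ring. }
  assert (Hid : Fh h = (RtoC (LL a b) * (ce (uC h) - Tq c1u c2u c3u h)
     + RtoC (MM a b) * (ce (RtoC (- c1u) * h + RtoC (- c2u) * h * h + RtoC (- c3u) * h * h * h) - Tq (- c1u) (- c2u) (- c3u) h)
     - RtoC (EE b * exp a) * (ce (RtoC 1 * h + RtoC 0 * h * h + RtoC 0 * h * h * h) - Tq 1 0 0 h)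
     - RtoC (EE b * exp (- a)) * (ce (RtoC (-1) * h + RtoC 0 * h * h + RtoC 0 * h * h * h) - Tq (-1) 0 0 h)
     + (RtoC (LL a b) * Tq c1u c2u c3u h + RtoC (MM a b) * Tq (- c1u) (- c2u) (- c3u) h
   - RtoC (EE b * exp a) * Tq 1 0 0 h - RtoC (EE b * exp (- a)) * Tq (-1) 0 0 h))%C).
  { unfold Fh. rewrite tau_eq, Hu, <- H1, <- H2. ring. }

  rewrite Hid, bracket0, Cplus_0_r.
  eapply Rle_trans. apply Cmod_sub.
  eapply Rle_trans. apply Rplus_le_compat_r. apply Cmod_sub.
  eapply Rle_trans. apply Rplus_le_compat_r. apply Rplus_le_compat_r. apply Cmod_triangle.
  rewrite !Cmod_mult, !Cmod_RtoC.
  pose proof (expoly c1u c2u c3u h Hh) as X1. pose proof (expoly (- c1u) (- c2u) (- c3u) h Hh) as X2.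
  pose proof (expoly 1 0 0 h Hh) as X3. pose proof (expoly (-1) 0 0 h Hh) as X4.
  unfold uC. unfold KF.
  pose proof (Rabs_pos (LL a b)) as P1. pose proof (Rabs_pos (MM a b)) as P2. pose proof (Rabs_pos (EE b * exp a)) as P3.
  pose proof (Rabs_pos (EE b * exp (- a))) as P4.
  match goal with |- _ <= ?R => 
   replace R with (Rabs (LL a b) * (Kq c1u c2u c3u * Cmod h ^ 4) + Rabs (MM a b) * (Kq (- c1u) (- c2u) (- c3u) * Cmod h ^ 4) +
  Rabs (EE b * exp a) * (Kq 1 0 0 * Cmod h ^ 4) + Rabs (EE b * exp (- a)) * (Kq (-1) 0 0 * Cmod h ^ 4)) by ring end.
  apply Rplus_le_compat; [apply Rplus_le_compat; [apply Rplus_le_compat|]|].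
  all: apply Rmult_le_compat_l; [assumption|]. exact X1. exact X2. exact X3. exact X4.
Qed.

Definition KQ := LL a b * exp (Sq c1u c2u c3u) * KF.

Lemma KF_ge0 : 0 <= KF.
Proof. unfold KF, Kq. pose proof (Sq_ge0 c1u c2u c3u). pose proof (Sq_ge0 (-c1u) (-c2u) (-c3u)).
  pose proof (Sq_ge0 1 0 0). pose proof (Sq_ge0 (-1) 0 0).
  pose proof (Rabs_pos (LL a b)). pose proof (Rabs_pos (MM a b)). pose proof (Rabs_pos (EE b * exp a)).
  pose proof (Rabs_pos (EE b * exp (- a))).
  repeat apply Rplus_le_le_0_compat; apply Rmult_le_pos; auto;
  repeat apply Rplus_le_le_0_compat; try apply Rmult_le_pos; try apply pow_le; try lra; left; apply exp_pos. Qed.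

Lemma LL_pos : 0 < LL a b.
Proof. unfold LL. pose proof (EE_pos b). pose proof (ch_pos a). pose proof (ss_pos a b). nra. Qed.

Lemma uC_bound h : Cmod h <= 1 -> Cmod (uC h) <= Sq c1u c2u c3u * Cmod h.
Proof. apply polyv_bound. Qed.

Lemma wC_bound h : Cmod h <= 1 -> Cmod (wC h) <= LL a b * exp (Sq c1u c2u c3u).
Proof. intros Hh. unfold wC. rewrite Cmod_mult, Cmod_RtoC, Rabs_pos_eq by (left; apply LL_pos).
  apply Rmult_le_compat_l. left; apply LL_pos. eapply Rle_trans. apply Cmod_ce_le.
  pose proof (uC_bound h Hh). pose proof (Sq_ge0 c1u c2u c3u). pose proof (Cmod_ge_0 h).
  destruct (Rle_lt_or_eq_dec (Cmod (uC h)) (Sq c1u c2u c3u)). nra. left; apply exp_increasing; auto. rewrite e; lra. Qed.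

Lemma Qw_bound h : Cmod h <= 1 -> Cmod (Qw h) <= KQ * Cmod h ^ 4.
Proof. intros Hh. rewrite Qw_eq, Cmod_mult. unfold KQ. rewrite Rmult_assoc. apply Rmult_le_compat.
  apply Cmod_ge_0. apply Cmod_ge_0. apply wC_bound; auto. apply Fh_bound; auto. Qed.

End Q.

Definition csqrt (z : C) : C :=
  (sqrt ((Cmod z + fst z) / 2),
   if Rle_dec 0 (snd z) then sqrt ((Cmod z - fst z) / 2) else - sqrt ((Cmod z - fst z) / 2)).

Lemma csqrt_sq (z : C) : (csqrt z * csqrt z)%C = z.
Proof.
  destruct z as [p q]. unfold csqrt. simpl.
  pose proof (fst_le_Cmod (p,q)) as H1. pose proof (snd_le_Cmod (p,q)) as H2. simpl in H1, H2.
  pose proof (Rle_abs p). pose proof (Rabs_maj2 p).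
  assert (Hm : Cmod (p,q) * Cmod (p,q) = p * p + q * q).
  { unfold Cmod; simpl. rewrite sqrt_sqrt by nra. ring. }
  set (c := Cmod (p,q)) in *.
  assert (A : 0 <= (c + p) / 2) by lra. assert (B : 0 <= (c - p) / 2) by lra.
  assert (Hprod : sqrt ((c + p) / 2) * sqrt ((c - p) / 2) = Rabs q / 2).
  { rewrite <- sqrt_mult by auto.
    assert (Hq : Rabs q * Rabs q = q * q) by (rewrite <- Rabs_mult; apply Rabs_pos_eq; nra).
    replace ((c + p) / 2 * ((c - p) / 2)) with ((Rabs q / 2) * (Rabs q / 2)).
    apply sqrt_square. pose proof (Rabs_pos q); lra.
    transitivity ((c * c - p * p) / 4). rewrite Hm, <- Hq. field. field. }
  apply ceq; simpl.
  - destruct (Rle_dec 0 q).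
    + rewrite !Rmult_1_r || idtac. rewrite !sqrt_sqrt by auto. field.
    + replace (sqrt ((c + p) / 2) * sqrt ((c + p) / 2) - - sqrt ((c - p) / 2) * - sqrt ((c - p) / 2))
        with (sqrt ((c + p) / 2) * sqrt ((c + p) / 2) - sqrt ((c - p) / 2) * sqrt ((c - p) / 2)) by ring.
      rewrite !sqrt_sqrt by auto. field.
  - destruct (Rle_dec 0 q).
    + replace (sqrt ((c + p) / 2) * sqrt ((c - p) / 2) + sqrt ((c - p) / 2) * sqrt ((c + p) / 2))
        with (2 * (sqrt ((c + p) / 2) * sqrt ((c - p) / 2))) by ring.
      rewrite Hprod, Rabs_pos_eq by auto. field.
    + replace (sqrt ((c + p) / 2) * - sqrt ((c - p) / 2) + - sqrt ((c - p) / 2) * sqrt ((c + p) / 2))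
        with (- (2 * (sqrt ((c + p) / 2) * sqrt ((c - p) / 2)))) by ring.
      rewrite Hprod, Rabs_left by lra. field.
Qed.

Ltac cnz := let HH := fresh in intro HH; apply (f_equal fst) in HH; simpl in HH; lra.

Section Roots.
Variables (t d w : C).
Definition r1 : C := ((t + csqrt (t * t - 4 * d)) / 2)%C.
Definition r2 : C := ((t - csqrt (t * t - 4 * d)) / 2)%C.
Definition lamsel : C := if Rle_dec (Cmod (w - r1)) (Cmod (w - r2)) then r1 else r2.
Definition lamsel' : C := (t - lamsel)%C.

Lemma r12_prod : (r1 * r2)%C = d.
Proof. unfold r1, r2. 
  transitivity ((t * t - csqrt (t * t - 4 * d) * csqrt (t * t - 4 * d)) / 4)%C.
  field.
  rewrite csqrt_sq. field; try cnz. Qed.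

Lemma lam_prod : (lamsel * lamsel')%C = d.
Proof. unfold lamsel', lamsel. destruct Rle_dec.
  - replace (t - r1)%C with r2. apply r12_prod. unfold r1, r2. field; try cnz.
  - replace (t - r2)%C with r1. rewrite Cmult_comm. apply r12_prod. unfold r1, r2. field; try cnz.
Qed.

Lemma lam_close : Cmod (w - lamsel) <= Cmod (w - lamsel').
Proof. unfold lamsel', lamsel. destruct Rle_dec.
  - replace (t - r1)%C with r2. auto. unfold r1, r2. field; try cnz.
  - replace (t - r2)%C with r1. lra. unfold r1, r2. field; try cnz.
Qed.

Lemma Q_factor : (w * w - t * w + d)%C = ((w - lamsel) * (w - lamsel'))%C.
Proof. rewrite <- lam_prod. unfold lamsel'. ring. Qed.

Lemma lam_est (s : R) : 0 < s -> s <= Cmod (2 * w - t)%C ->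
  Cmod (w - lamsel) <= 2 / s * Cmod (w * w - t * w + d)%C.
Proof.
  intros Hs Hw. rewrite Q_factor, Cmod_mult.
  pose proof lam_close.
  assert (Cmod (2 * w - t)%C <= Cmod (w - lamsel) + Cmod (w - lamsel')).
  { replace (2 * w - t)%C with ((w - lamsel) + (w - lamsel'))%C by (unfold lamsel'; ring). apply Cmod_triangle. }
  assert (s / 2 <= Cmod (w - lamsel')) by lra.
  pose proof (Cmod_ge_0 (w - lamsel)).
  apply Rle_trans with (2 / s * (Cmod (w - lamsel) * (s/2))).
  right; field; lra.
  apply Rmult_le_compat_l. apply Rlt_le, Rdiv_lt_0_compat; lra.
  apply Rmult_le_compat_l; auto.
Qed.
End Roots.

Definition near (f : C -> C) (f0 : C) (r : R) : Prop :=
  exists K, 0 <= K /\ forall h, Cmod h <= r -> Cmod (f h - f0)%C <= K * Cmod h.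

Lemma near_mono f f0 r r' : r' <= r -> near f f0 r -> near f f0 r'.
Proof. intros Hr [K [HK H]]. exists K. split; auto. intros h Hh. apply H. lra. Qed.

Lemma near_const c r : near (fun _ => c) c r.
Proof. exists 0. split. lra. intros h _. replace (c - c)%C with (RtoC 0) by ring. rewrite Cmod_0. pose proof (Cmod_ge_0 h). lra. Qed.

Lemma near_id r : near (fun h => h) 0 r.
Proof. exists 1. split. lra. intros h _. replace (h - 0)%C with h by ring. lra. Qed.

Lemma near_bound f f0 r : 0 <= r -> near f f0 r -> exists B, forall h, Cmod h <= r -> Cmod (f h) <= B.
Proof. intros Hr [K [HK H]]. exists (Cmod f0 + K * r). intros h Hh.
  replace (f h) with ((f h - f0) + f0)%C by ring. eapply Rle_trans. apply Cmod_triangle.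
  pose proof (H h Hh). pose proof (Cmod_ge_0 h). nra. Qed.

Lemma near_add f g f0 g0 r : near f f0 r -> near g g0 r -> near (fun h => f h + g h)%C (f0 + g0)%C r.
Proof. intros [K1 [H1 F]] [K2 [H2 G]]. exists (K1 + K2). split. lra. intros h Hh.
  replace (f h + g h - (f0 + g0))%C with ((f h - f0) + (g h - g0))%C by ring.
  eapply Rle_trans. apply Cmod_triangle. pose proof (F h Hh). pose proof (G h Hh). lra. Qed.

Lemma near_opp f f0 r : near f f0 r -> near (fun h => - f h)%C (- f0)%C r.
Proof. intros [K1 [H1 F]]. exists K1. split. lra. intros h Hh.
  replace (- f h - - f0)%C with (- (f h - f0))%C by ring. rewrite Cmod_opp. auto. Qed.

Lemma near_sub f g f0 g0 r : near f f0 r -> near g g0 r -> near (fun h => f h - g h)%C (f0 - g0)%C r.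
Proof. intros. apply (near_add f (fun h => - g h)%C). auto. apply near_opp; auto. Qed.

Lemma near_mul f g f0 g0 r : 0 <= r -> near f f0 r -> near g g0 r -> near (fun h => f h * g h)%C (f0 * g0)%C r.
Proof. intros Hr Hf Hg. destruct (near_bound g g0 r Hr Hg) as [B HB].
  destruct Hf as [K1 [H1 F]]. destruct Hg as [K2 [H2 G]].
  exists (K1 * Rmax B 0 + Cmod f0 * K2). split.
  { pose proof (Rmax_r B 0). pose proof (Cmod_ge_0 f0). apply Rplus_le_le_0_compat; apply Rmult_le_pos; lra. }
  intros h Hh.
  replace (f h * g h - f0 * g0)%C with ((f h - f0) * g h + f0 * (g h - g0))%C by ring.
  eapply Rle_trans. apply Cmod_triangle. rewrite !Cmod_mult.
  pose proof (F h Hh). pose proof (G h Hh). pose proof (HB h Hh). pose proof (Rmax_l B 0). pose proof (Rmax_r B 0).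
  pose proof (Cmod_ge_0 h). pose proof (Cmod_ge_0 f0). pose proof (Cmod_ge_0 (g h)). pose proof (Cmod_ge_0 (f h - f0)%C).
  assert (Cmod (f h - f0) * Cmod (g h) <= K1 * Cmod h * Rmax B 0).
  { apply Rmult_le_compat; auto. lra. }
  assert (Cmod f0 * Cmod (g h - g0) <= Cmod f0 * (K2 * Cmod h)).
  { apply Rmult_le_compat_l; auto. }
  nra. Qed.

Lemma near_inv f f0 r : 0 < r -> f0 <> RtoC 0 -> near f f0 r ->
  exists r', 0 < r' /\ r' <= r /\ near (fun h => / f h)%C (/ f0)%C r' /\ forall h, Cmod h <= r' -> Cmod f0 / 2 <= Cmod (f h).
Proof. intros Hr Hf0 [K [HK F]].
  assert (Hc : 0 < Cmod f0) by (apply Cmod_gt_0; auto).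
  set (r' := Rmin r (Cmod f0 / (2 * (K + 1)))).
  assert (Hr' : 0 < r'). { unfold r'. apply Rmin_glb_lt; auto. apply Rdiv_lt_0_compat; lra. }
  assert (Hr'1 : r' <= r) by apply Rmin_l.
  assert (Hr'2 : r' <= Cmod f0 / (2 * (K + 1))) by apply Rmin_r.
  assert (Hlow : forall h, Cmod h <= r' -> Cmod f0 / 2 <= Cmod (f h)).
  { intros h Hh. pose proof (F h ltac:(lra)).
    assert (K * Cmod h <= Cmod f0 / 2).
    { apply Rle_trans with ((K + 1) * (Cmod f0 / (2 * (K + 1)))).
      pose proof (Cmod_ge_0 h). apply Rle_trans with ((K+1) * Cmod h). nra. apply Rmult_le_compat_l; lra.
      right; field; lra. }
    pose proof (Cmod_triangle (f0 - f h) (f h))%C as T.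
    replace (f0 - f h + f h)%C with f0 in T by ring.
    replace (f0 - f h)%C with (- (f h - f0))%C in T by ring. rewrite Cmod_opp in T. lra. }
  exists r'. split; auto. split; auto. split; auto.
  exists (2 * K / (Cmod f0 * Cmod f0)). split.
  { apply Rmult_le_pos. lra. apply Rlt_le, Rinv_0_lt_compat. nra. }
  intros h Hh. pose proof (Hlow h Hh).
  assert (Hfh : f h <> RtoC 0). { intro Hz. rewrite Hz, Cmod_0 in H. lra. }
  replace (/ f h - / f0)%C with ((f0 - f h) / (f h * f0))%C by (field; split; auto).
  rewrite Cmod_div by (apply Cmult_neq_0; auto). rewrite Cmod_mult.
  replace (f0 - f h)%C with (- (f h - f0))%C by ring. rewrite Cmod_opp.
  pose proof (F h ltac:(lra)). pose proof (Cmod_ge_0 h).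
  apply Rle_trans with (K * Cmod h / (Cmod f0 / 2 * Cmod f0)).
  - unfold Rdiv. apply Rmult_le_compat; auto. apply Cmod_ge_0. left; apply Rinv_0_lt_compat; nra.
    apply Rinv_le_contravar. nra. apply Rmult_le_compat_r; lra.
  - right. field. lra.
Qed.

Lemma near_ce (k : R) : near (fun h => ce (RtoC k * h)%C) (RtoC 1) 1.
Proof. exists (Rabs k * exp (Rabs k)). split. apply Rmult_le_pos. apply Rabs_pos. left; apply exp_pos.
  intros h Hh. eapply Rle_trans. apply ce_taylor1. rewrite Cmod_mult, Cmod_RtoC.
  pose proof (Rabs_pos k). pose proof (Cmod_ge_0 h).
  assert (exp (Rabs k * Cmod h) <= exp (Rabs k)).
  { destruct (Rle_lt_or_eq_dec (Rabs k * Cmod h) (Rabs k)). nra. left; apply exp_increasing; auto. rewrite e; lra. }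
  replace (Rabs k * exp (Rabs k) * Cmod h) with ((Rabs k * Cmod h) * exp (Rabs k)) by ring.
  apply Rmult_le_compat_l. nra. auto. Qed.

Lemma near_scal (c : C) f f0 r : near f f0 r -> near (fun h => c * f h)%C (c * f0)%C r.
Proof. intros [K [HK F]]. exists (Cmod c * K). split. apply Rmult_le_pos; auto. apply Cmod_ge_0.
  intros h Hh. replace (c * f h - c * f0)%C with (c * (f h - f0))%C by ring. rewrite Cmod_mult.
  rewrite Rmult_assoc. apply Rmult_le_compat_l. apply Cmod_ge_0. auto. Qed.

Lemma near_ext f g f0 r : (forall h, Cmod h <= r -> f h = g h) -> near g f0 r -> near f f0 r.
Proof. intros E [K [HK F]]. exists K. split; auto. intros h Hh. rewrite E; auto. Qed.

Import ListNotations.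

Definition fsum {A} (f : A -> C) (l : list A) : C := fold_right Cplus (RtoC 0) (map f l).

Lemma fsum_app {A} (f : A -> C) l1 l2 : fsum f (l1 ++ l2) = (fsum f l1 + fsum f l2)%C.
Proof. unfold fsum. rewrite map_app. induction l1; simpl. ring. rewrite IHl1. ring. Qed.

Lemma fsum_scal {A} (k : C) (f : A -> C) l : fsum (fun s => k * f s)%C l = (k * fsum f l)%C.
Proof. unfold fsum. induction l; simpl. ring. rewrite IHl. ring. Qed.

Lemma fsum_ext {A} (f g : A -> C) l : (forall s, f s = g s) -> fsum f l = fsum g l.
Proof. intros E. unfold fsum. f_equal. apply map_ext. auto. Qed.

Lemma fsum_map {A B} (f : B -> C) (g : A -> B) l : fsum f (map g l) = fsum (fun s => f (g s)) l.
Proof. unfold fsum. rewrite map_map. auto. Qed.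

Section Z.
Variable b : R.

Definition wt (x : C) (s : list bool) : C := ce (x * RtoC (magn s) + RtoC b * RtoC (nbr s))%C.
Definition Zc (n : nat) (x : C) : C := fsum (wt x) (configs n).
Definition Gc (n : nat) (c : bool) (x : C) : C := fsum (fun s => wt x (c :: s)) (configs n).

Lemma Zc_S n x : Zc (S n) x = (Gc n true x + Gc n false x)%C.
Proof. unfold Zc, Gc. simpl. rewrite fsum_app, !fsum_map. reflexivity. Qed.

Lemma wt_split x c d s : wt x (c :: d :: s) = (ce (x * RtoC (spin c) + RtoC (b * spin c * spin d)) * wt x (d :: s))%C.
Proof. unfold wt. rewrite <- ce_add. f_equal. change (magn (c :: d :: s)) with (spin c + magn (d :: s)).
  change (nbr (c :: d :: s)) with (spin c * spin d + nbr (d :: s)).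
  apply ceq; simpl; ring. Qed.

Lemma Gc_S n c x : Gc (S n) c x =
  (ce (x * RtoC (spin c) + RtoC (b * spin c * 1)) * Gc n true x + ce (x * RtoC (spin c) + RtoC (b * spin c * (-1))) * Gc n false x)%C.
Proof. unfold Gc at 1. simpl. rewrite fsum_app, !fsum_map.
  rewrite (fsum_ext _ (fun s => ce (x * RtoC (spin c) + RtoC (b * spin c * 1)) * wt x (true :: s))%C).
  rewrite (fsum_ext (fun s => wt x (c :: false :: s)) (fun s => ce (x * RtoC (spin c) + RtoC (b * spin c * (-1))) * wt x (false :: s))%C).
  rewrite !fsum_scal. reflexivity.
  intros s; rewrite wt_split; reflexivity. intros s; rewrite wt_split; reflexivity. Qed.

Definition tauc (x : C) : C := (RtoC (exp b) * (ce x + ce (- x)))%C.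
Definition delc : C := RtoC (exp b * exp b - / exp b * / exp b).

Lemma ce_comb x (k e : R) : ce (x * RtoC k + RtoC e) = (ce (RtoC k * x) * RtoC (exp e))%C.
Proof. rewrite <- ce_R, <- ce_add. f_equal. ring. Qed.

Lemma Zc_rec n x : Zc (S (S (S n))) x = (tauc x * Zc (S (S n)) x - delc * Zc (S n) x)%C.
Proof.
  rewrite !Zc_S, !Gc_S. unfold tauc, delc. simpl spin.
  rewrite !ce_comb.
  replace (RtoC 1 * x)%C with x by ring. replace (RtoC (-1) * x)%C with (- x)%C by (apply ceq; simpl; ring).
  replace (b * 1 * 1) with b by ring. replace (b * 1 * -1) with (- b) by ring.
  replace (b * -1 * 1) with (- b) by ring. replace (b * -1 * -1) with b by ring.
  rewrite exp_Ropp.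
  assert (HY : ce (- x) = (/ ce x)%C).
  { pose proof (ce_opp x). pose proof (ce_neq0 x). rewrite <- (Cmult_1_l (/ ce x)), <- H. field. auto. }
  rewrite HY. pose proof (ce_neq0 x). pose proof (exp_pos b).
  rewrite !RtoC_minus, !RtoC_mult, !RtoC_inv by lra. field.
  split. intro Hc. apply (f_equal fst) in Hc. simpl in Hc. lra. auto. Qed.
End Z.

Lemma closed_form (Z : nat -> C) (t d l l' : C) :
  (forall n, Z (S (S (S n))) = (t * Z (S (S n)) - d * Z (S n))%C) -> (l + l')%C = t -> (l * l')%C = d -> (l - l')%C <> RtoC 0 ->
  forall n, Z (S n) = ((Z 2%nat - l' * Z 1%nat) / (l - l') * Cpow l n + (l * Z 1%nat - Z 2%nat) / (l - l') * Cpow l' n)%C.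
Proof.
  intros Hrec Ht Hd Hl.
  assert (forall n, Z (S n) = ((Z 2%nat - l' * Z 1%nat) / (l - l') * Cpow l n + (l * Z 1%nat - Z 2%nat) / (l - l') * Cpow l' n)%C
     /\ Z (S (S n)) = ((Z 2%nat - l' * Z 1%nat) / (l - l') * Cpow l (S n) + (l * Z 1%nat - Z 2%nat) / (l - l') * Cpow l' (S n))%C).
  { induction n.
    - split; simpl; field; auto.
    - destruct IHn as [A B]. split; auto. rewrite Hrec, A, B, <- Ht, <- Hd. simpl. field; auto. }
  intros n; apply H.
Qed.

Import ListNotations.

Lemma fsum_RtoC {A} (f : A -> R) l : fsum (fun s => RtoC (f s)) l = RtoC (fold_right Rplus 0 (map f l)).
Proof. unfold fsum. induction l; simpl. reflexivity. rewrite IHl, RtoC_plus. reflexivity. Qed.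

Lemma Zc_real a b n : Zc b n (RtoC a) = RtoC (ising_Z a b n).
Proof. unfold Zc, ising_Z. rewrite <- fsum_RtoC. apply fsum_ext. intros s. unfold wt, ising_weight.
  rewrite <- ce_R. f_equal. apply ceq; simpl; ring. Qed.

Lemma configs_nonnil n : configs n <> [].
Proof. induction n; simpl. discriminate. destruct (configs n). congruence. simpl. discriminate. Qed.

Lemma fold_w_nonneg a b l : 0 <= fold_right Rplus 0 (map (ising_weight a b) l).
Proof. induction l; simpl. lra. pose proof (exp_pos (a * magn a0 + b * nbr a0)). unfold ising_weight at 1. lra. Qed.

Lemma ising_Z_pos a b n : 0 < ising_Z a b n.
Proof. unfold ising_Z. pose proof (configs_nonnil n). destruct (configs n) as [|s l]. congruence.
  simpl. pose proof (fold_w_nonneg a b l).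
  pose proof (exp_pos (a * magn s + b * nbr s)). unfold ising_weight at 1. lra. Qed.

Lemma Z1_val a b : ising_Z a b 1 = exp a + exp (- a).
Proof. unfold ising_Z, ising_weight, magn. simpl.
  replace (a * (1 + 0) + b * 0) with a by ring. replace (a * (-1 + 0) + b * 0) with (- a) by ring. ring. Qed.

Lemma Z2_val a b : ising_Z a b 2 = exp b * (exp a * exp a) + 2 * / exp b + exp b * (exp (- a) * exp (- a)).
Proof. unfold ising_Z, ising_weight, magn. simpl.
  replace (a * (1 + (1 + 0)) + b * (1 * 1 + 0)) with (b + (a + a)) by ring.
  replace (a * (1 + (-1 + 0)) + b * (1 * -1 + 0)) with (- b) by ring.
  replace (a * (-1 + (1 + 0)) + b * (-1 * 1 + 0)) with (- b) by ring.
  replace (a * (-1 + (-1 + 0)) + b * (-1 * -1 + 0)) with (b + (- a + - a)) by ring.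
  rewrite !exp_plus, exp_Ropp. ring. Qed.

Definition c0 a b := (ising_Z a b 2 - MM a b * ising_Z a b 1) / (LL a b - MM a b).
Definition c0' a b := (LL a b * ising_Z a b 1 - ising_Z a b 2) / (LL a b - MM a b).

Lemma LmM a b : LL a b - MM a b = 2 * ss a b.
Proof. unfold LL, MM. ring. Qed.

Lemma c0_pos a b : 0 < c0 a b.
Proof. unfold c0. rewrite LmM, Z1_val, Z2_val. change (exp b) with (EE b). rewrite (ea_eq a), (ema_eq a). unfold MM.
  pose proof (ss_pos a b). pose proof (EE_pos b). pose proof (ch_pos a).
  replace (EE b * ((ch a + sh a) * (ch a + sh a)) + 2 * / EE b + EE b * ((ch a - sh a) * (ch a - sh a)) -
    (EE b * ch a - ss a b) * (ch a + sh a + (ch a - sh a)))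
   with (2 * EE b * (sh a * sh a) + 2 * / EE b + 2 * ss a b * ch a) by ring.
  apply Rdiv_lt_0_compat; try lra.
  assert (0 <= EE b * (sh a * sh a)) by (apply Rmult_le_pos; [lra | apply Rle_0_sqr]).
  pose proof (Rinv_0_lt_compat _ H0). assert (0 < ss a b * ch a) by (apply Rmult_lt_0_compat; lra). lra. Qed.

Lemma near_fsum {A} (F : A -> C -> C) (l : list A) r :
  (forall s, near (F s) (F s (RtoC 0)) r) -> near (fun h => fsum (fun s => F s h) l) (fsum (fun s => F s (RtoC 0)) l) r.
Proof. intros H. induction l.
  - unfold fsum; simpl. apply near_const.
  - unfold fsum in *; simpl. apply (near_add (F a) (fun h => fold_right Cplus 0 (map (fun s => F s h) l))); auto. Qed.

Lemma near_Zc a b k : near (fun h => Zc b k (RtoC a + h)%C) (Zc b k (RtoC a)) 1.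
Proof.
  unfold Zc. replace (fsum (wt b (RtoC a)) (configs k)) with (fsum (fun s => wt b (RtoC a + RtoC 0) s) (configs k))
    by (apply fsum_ext; intros; f_equal; ring).
  apply (near_fsum (fun s h => wt b (RtoC a + h)%C s)). intros s.
  apply near_ext with (g := fun h => (wt b (RtoC a) s * ce (RtoC (magn s) * h))%C).
  { intros h _. unfold wt. rewrite <- ce_add. f_equal. ring. }
  replace (wt b (RtoC a + RtoC 0) s) with (wt b (RtoC a) s * RtoC 1)%C.
  apply near_scal. apply near_ce.
  unfold wt. rewrite Cmult_1_r. f_equal. ring.
Qed.

Lemma near_val f f0 f1 r : f0 = f1 -> near f f0 r -> near f f1 r.
Proof. intros ->; auto. Qed.

Lemma Cmod_rev_tri (x y : C) : Cmod x - Cmod (x - y)%C <= Cmod y.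
Proof. pose proof (Cmod_triangle (x - y) y). replace (x - y + y)%C with x in H by ring. lra. Qed.

Lemma near_lower f v r K : 0 <= K -> (forall h, Cmod h <= r -> Cmod (f h - v)%C <= K * Cmod h) ->
  forall h, Cmod h <= Rmin r (Cmod v / (2 * (K + 1))) -> Cmod v / 2 <= Cmod (f h).
Proof. intros HK H h Hh. pose proof (Rmin_l r (Cmod v / (2 * (K + 1)))). pose proof (Rmin_r r (Cmod v / (2 * (K + 1)))).
  pose proof (H h ltac:(lra)). pose proof (Cmod_ge_0 h). pose proof (Cmod_ge_0 v).
  assert (K * Cmod h <= Cmod v / 2).
  { apply Rle_trans with ((K + 1) * (Cmod v / (2 * (K + 1)))). 
    apply Rle_trans with ((K+1) * Cmod h). lra. apply Rmult_le_compat_l; lra. right; field; lra. }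
  pose proof (Cmod_rev_tri v (f h)). replace (v - f h)%C with (- (f h - v))%C in H6 by ring. rewrite Cmod_opp in H6. lra. Qed.

Section K.
Variables a b : R.

Lemma near_ceu : near (fun h => ce (uC a b h)) (RtoC 1) 1.
Proof. exists (Sq (c1u a b) (c2u a b) (c3u a b) * exp (Sq (c1u a b) (c2u a b) (c3u a b))). split.
  apply Rmult_le_pos. apply Sq_ge0. left; apply exp_pos.
  intros h Hh. eapply Rle_trans. apply ce_taylor1. pose proof (uC_bound a b h Hh). pose proof (Sq_ge0 (c1u a b) (c2u a b) (c3u a b)).
  pose proof (Cmod_ge_0 h). pose proof (Cmod_ge_0 (uC a b h)).
  assert (exp (Cmod (uC a b h)) <= exp (Sq (c1u a b) (c2u a b) (c3u a b))).
  { destruct (Rle_lt_or_eq_dec (Cmod (uC a b h)) (Sq (c1u a b) (c2u a b) (c3u a b))). nra. left; apply exp_increasing; auto. rewrite e; lra. }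
  replace (Sq (c1u a b) (c2u a b) (c3u a b) * exp (Sq (c1u a b) (c2u a b) (c3u a b)) * Cmod h)
   with ((Sq (c1u a b) (c2u a b) (c3u a b) * Cmod h) * exp (Sq (c1u a b) (c2u a b) (c3u a b))) by ring.
  apply Rmult_le_compat; auto. left; apply exp_pos. Qed.

Lemma near_w : near (wC a b) (RtoC (LL a b)) 1.
Proof. apply near_val with (RtoC (LL a b) * RtoC 1)%C. ring. apply near_scal, near_ceu. Qed.

Lemma near_tau : near (tau a b) (RtoC (LL a b + MM a b)) 1.
Proof.
  apply near_ext with (g := fun h => (RtoC (EE b * exp a) * ce (RtoC 1 * h) + RtoC (EE b * exp (- a)) * ce (RtoC (-1) * h))%C).
  { intros h _. rewrite tau_eq. f_equal; f_equal; f_equal. ring. apply ceq; simpl; ring. }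
  apply near_val with (RtoC (EE b * exp a) * RtoC 1 + RtoC (EE b * exp (- a)) * RtoC 1)%C.
  { rewrite !Cmult_1_r, <- RtoC_plus. f_equal. pose proof (I0 a b). lra. }
  apply near_add; apply near_scal; apply near_ce.
Qed.

Definition lam (h : C) := lamsel (tau a b h) (RtoC (del b)) (wC a b h).
Definition lam' (h : C) := lamsel' (tau a b h) (RtoC (del b)) (wC a b h).
Definition Z1h (h : C) := Zc b 1 (RtoC a + h).
Definition Z2h (h : C) := Zc b 2 (RtoC a + h).
Definition cc (h : C) := ((Z2h h - lam' h * Z1h h) / (lam h - lam' h))%C.
Definition cc' (h : C) := ((lam h * Z1h h - Z2h h) / (lam h - lam' h))%C.

Lemma Zc_closed h : (lam h - lam' h)%C <> RtoC 0 ->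
  forall m, Zc b (S m) (RtoC a + h) = (cc h * Cpow (lam h) m + cc' h * Cpow (lam' h) m)%C.
Proof. intros Hne. apply (closed_form (fun n => Zc b n (RtoC a + h)) (tau a b h) (RtoC (del b))).
  - intros n. rewrite Zc_rec. reflexivity.
  - unfold lam, lam', lamsel'. ring.
  - apply lam_prod.
  - auto.
Qed.

End K.

Lemma pow4_le (x : R) : 0 <= x <= 1 -> x ^ 4 <= x.
Proof. intros. simpl. assert (x * x <= 1) by nra. assert (x * (x * x) <= 1) by nra. nra. Qed.

Lemma key a b : exists r Ce Kc B rho, 0 < r /\ r <= 1 /\ 0 <= Ce /\ 0 <= Kc /\ 0 <= B /\ 0 <= rho < 1 /\
 forall h, Cmod h <= r ->
   (forall m, Zc b (S m) (RtoC a + h) = (cc a b h * Cpow (lam a b h) m + cc' a b h * Cpow (lam' a b h) m)%C) /\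
   Cmod (lam a b h / wC a b h - 1)%C <= Ce * Cmod h ^ 4 /\
   Cmod (cc a b h / RtoC (c0 a b) - 1)%C <= Kc * Cmod h /\
   Cmod (cc' a b h / cc a b h)%C <= B /\ Cmod (lam' a b h / lam a b h)%C <= rho /\
   lam a b h <> RtoC 0 /\ cc a b h <> RtoC 0.
Proof.
  set (L := LL a b). set (M := MM a b). set (s := ss a b).
  pose proof (ss_pos a b) as Hs. fold s in Hs. pose proof (LL_pos a b) as HL. fold L in HL.
  pose proof (KF_ge0 a b) as HKF.
  assert (HKQ : 0 <= KQ a b). { unfold KQ. pose proof (LL_pos a b). apply Rmult_le_pos; auto. apply Rmult_le_pos. lra. left; apply exp_pos. }
  assert (N2 : near (fun h => 2 * wC a b h - tau a b h)%C (RtoC (2 * s)) 1).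
  { apply near_val with (2 * RtoC L - RtoC (L + M))%C.
    { apply ceq; cbn [fst snd RtoC Cmult Cplus Cminus Copp]; unfold L, M, s, LL, MM; ring. }
    apply near_sub. apply near_scal. apply near_w. apply near_tau. }
  destruct N2 as [Kd [HKd Hd]].
  set (r1 := Rmin 1 (Cmod (RtoC (2 * s)) / (2 * (Kd + 1)))).
  assert (Hr1 : 0 < r1). { unfold r1. rewrite Cmod_RtoC, Rabs_pos_eq by lra. apply Rmin_glb_lt. lra. apply Rdiv_lt_0_compat; lra. }
  assert (Hr11 : r1 <= 1) by apply Rmin_l.
  assert (Hlow : forall h, Cmod h <= r1 -> s <= Cmod (2 * wC a b h - tau a b h)%C).
  { intros h Hh. pose proof (near_lower _ _ _ _ HKd Hd h Hh). rewrite Cmod_RtoC, Rabs_pos_eq in H by lra. lra. }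
  assert (Hlw : forall h, Cmod h <= r1 -> Cmod (wC a b h - lam a b h)%C <= 2 / s * KQ a b * Cmod h ^ 4).
  { intros h Hh. unfold lam. eapply Rle_trans. apply lam_est. apply Hs. apply Hlow; auto.
    rewrite Rmult_assoc. apply Rmult_le_compat_l. apply Rlt_le, Rdiv_lt_0_compat; lra.
    apply (Qw_bound a b h). lra. }
  assert (NL : near (lam a b) (RtoC L) r1).
  { destruct (near_w a b) as [Kw [HKw Hw]]. exists (2 / s * KQ a b + Kw). split.
    apply Rplus_le_le_0_compat; auto. apply Rmult_le_pos; auto. apply Rlt_le, Rdiv_lt_0_compat; lra.
    intros h Hh. replace (lam a b h - RtoC L)%C with (- (wC a b h - lam a b h) + (wC a b h - RtoC (LL a b)))%C by (unfold L; ring).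
    eapply Rle_trans. apply Cmod_triangle. rewrite Cmod_opp.
    pose proof (Hlw h Hh). pose proof (Hw h ltac:(lra)). pose proof (Cmod_ge_0 h).
    pose proof (pow4_le (Cmod h) ltac:(lra)).
    assert (2 / s * KQ a b * Cmod h ^ 4 <= 2 / s * KQ a b * Cmod h).
    { apply Rmult_le_compat_l; auto. apply Rmult_le_pos; auto. apply Rlt_le, Rdiv_lt_0_compat; lra. }
    lra. }
  assert (NL' : near (lam' a b) (RtoC M) r1).
  { apply near_ext with (g := fun h => (tau a b h - lam a b h)%C). { intros; reflexivity. }
    apply near_val with (RtoC (L + M) - RtoC L)%C. { apply ceq; simpl; ring. }
    apply near_sub; auto. apply near_mono with 1; auto. apply near_tau. }
  assert (NZ1 : near (Z1h a b) (RtoC (ising_Z a b 1)) r1).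
  { apply near_mono with 1; auto. rewrite <- Zc_real. apply near_Zc. }
  assert (NZ2 : near (Z2h a b) (RtoC (ising_Z a b 2)) r1).
  { apply near_mono with 1; auto. rewrite <- Zc_real. apply near_Zc. }
  assert (Nden : near (fun h => lam a b h - lam' a b h)%C (RtoC (L - M)) r1).
  { apply near_val with (RtoC L - RtoC M)%C. apply ceq; simpl; ring. apply near_sub; auto. }
  assert (HLM : RtoC (L - M) <> RtoC 0).
  { intro E. apply (f_equal fst) in E. simpl in E. unfold L, M in E. rewrite LmM in E. fold s in E. lra. }
  destruct (near_inv _ _ _ Hr1 HLM Nden) as [r2 [Hr2 [Hr21 [Ninv Hlowden]]]].
  assert (Nc : near (cc a b) (RtoC (c0 a b)) r2).
  { apply near_val with ((RtoC (ising_Z a b 2) - RtoC M * RtoC (ising_Z a b 1)) * / RtoC (L - M))%C.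
    { unfold c0. fold L M. rewrite <- RtoC_mult, <- RtoC_minus, <- RtoC_inv. rewrite <- RtoC_mult. reflexivity.
      intro E. unfold L, M in E. rewrite LmM in E. fold s in E. lra. }
    apply near_mul. lra. apply near_mono with r1; auto. apply near_sub; auto. apply near_mul; auto. lra. auto. }
  assert (Nc' : near (cc' a b) (RtoC (c0' a b)) r2).
  { apply near_val with ((RtoC L * RtoC (ising_Z a b 1) - RtoC (ising_Z a b 2)) * / RtoC (L - M))%C.
    { unfold c0'. fold L M. rewrite <- RtoC_mult, <- RtoC_minus, <- RtoC_inv. rewrite <- RtoC_mult. reflexivity.
      intro E. unfold L, M in E. rewrite LmM in E. fold s in E. lra. }
    apply near_mul. lra. apply near_mono with r1; auto. apply near_sub; auto. apply near_mul; auto. lra. auto. }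
  destruct (near_bound (cc' a b) _ r2 ltac:(lra) Nc') as [Bc' HBc'].
  destruct Nc as [Kc [HKc Hc]].
  pose proof (c0_pos a b) as Hc0.
  set (r3 := Rmin r2 (Cmod (RtoC (c0 a b)) / (2 * (Kc + 1)))).
  assert (Hlowc : forall h, Cmod h <= r3 -> c0 a b / 2 <= Cmod (cc a b h)).
  { intros h Hh. pose proof (near_lower _ _ _ _ HKc Hc h Hh). rewrite Cmod_RtoC, Rabs_pos_eq in H by lra. lra. }
  assert (Hr3 : 0 < r3). { unfold r3. rewrite Cmod_RtoC, Rabs_pos_eq by lra. apply Rmin_glb_lt. lra. apply Rdiv_lt_0_compat; lra. }
  assert (Hr32 : r3 <= r2) by apply Rmin_l.
  destruct NL as [Kl [HKl Hl]]. destruct NL' as [Kl' [HKl' Hl']].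
  assert (HML : Rabs M < L).
  { unfold M, L, MM, LL. pose proof (EE_pos b). pose proof (ch_pos a). apply Rabs_def1. fold s. lra.
    assert (0 < EE b * ch a) by (apply Rmult_lt_0_compat; lra). fold s; lra. }
  set (g := L - Rabs M).
  assert (Hg : 0 < g) by (unfold g; lra).
  set (r4 := Rmin r3 (g / (4 * (Kl + Kl' + 1)))).
  assert (Hr4 : 0 < r4). { unfold r4. apply Rmin_glb_lt. lra. apply Rdiv_lt_0_compat; lra. }
  assert (Hr43 : r4 <= r3) by apply Rmin_l.
  assert (Hr4g : r4 <= g / (4 * (Kl + Kl' + 1))) by apply Rmin_r.
  set (rho := (Rabs M + g / 4) / (L - g / 4)).
  assert (Hrho : 0 <= rho < 1).
  { unfold rho. pose proof (Rabs_pos M). split. apply Rmult_le_pos. lra. apply Rlt_le, Rinv_0_lt_compat. unfold g; lra.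
    apply Rmult_lt_reg_r with (L - g / 4). unfold g; lra. unfold Rdiv. rewrite Rmult_assoc, Rinv_l, Rmult_1_r. unfold g; lra. unfold g; lra. }
  set (Sw := Sq (c1u a b) (c2u a b) (c3u a b)).
  assert (Hwlow : forall h, Cmod h <= 1 -> L * exp (- Sw) <= Cmod (wC a b h)).
  { intros h Hh. unfold wC. rewrite Cmod_mult, Cmod_RtoC, Rabs_pos_eq by (unfold L in HL; lra). fold L.
    apply Rmult_le_compat_l. lra. eapply Rle_trans. 2: apply Cmod_ce_ge.
    pose proof (uC_bound a b h Hh). pose proof (Cmod_ge_0 h). pose proof (Sq_ge0 (c1u a b) (c2u a b) (c3u a b)). fold Sw in H, H1.
    destruct (Rle_lt_or_eq_dec (- Sw) (- Cmod (uC a b h))). nra. left; apply exp_increasing; auto. rewrite e; lra. }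
  set (Ce := 2 / s * KQ a b / (L * exp (- Sw))).
  assert (HLe : 0 < L * exp (- Sw)) by (apply Rmult_lt_0_compat; [lra | apply exp_pos]).
  exists r4, Ce, (Kc / c0 a b), (Bc' / (c0 a b / 2)), rho.
  split; auto. split. lra. split. unfold Ce. apply Rmult_le_pos. apply Rmult_le_pos; auto. apply Rlt_le, Rdiv_lt_0_compat; lra.
    apply Rlt_le, Rinv_0_lt_compat; auto.
  split. apply Rmult_le_pos; auto. apply Rlt_le, Rinv_0_lt_compat; auto.
  split. apply Rmult_le_pos. pose proof (HBc' 0%C). rewrite Cmod_0 in H. pose proof (Cmod_ge_0 (cc' a b 0)). lra. apply Rlt_le, Rinv_0_lt_compat; lra.
  split; auto.
  intros h Hh.
  assert (Hh3 : Cmod h <= r3) by lra. assert (Hh2 : Cmod h <= r2) by lra. assert (Hh1 : Cmod h <= r1) by lra.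
  pose proof (Cmod_ge_0 h) as Hh0.
  assert (Hden : (lam a b h - lam' a b h)%C <> RtoC 0).
  { intro E. pose proof (Hlowden h Hh2). rewrite E, Cmod_0, Cmod_RtoC in H. unfold L, M in H. rewrite LmM in H. fold s in H.
    rewrite Rabs_pos_eq in H; lra. }
  assert (Hlam : L - g / 4 <= Cmod (lam a b h)).
  { pose proof (Hl h Hh1). pose proof (Cmod_rev_tri (RtoC L) (lam a b h)).
    replace (RtoC L - lam a b h)%C with (- (lam a b h - RtoC L))%C in H0 by ring. rewrite Cmod_opp, Cmod_RtoC, Rabs_pos_eq in H0 by lra.
    assert (Kl * Cmod h <= g / 4).
    { apply Rle_trans with ((Kl + Kl' + 1) * (g / (4 * (Kl + Kl' + 1)))).
      apply Rle_trans with ((Kl + Kl' + 1) * Cmod h). nra. apply Rmult_le_compat_l; lra. right; field; lra. }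
    lra. }
  assert (Hlam' : Cmod (lam' a b h) <= Rabs M + g / 4).
  { pose proof (Hl' h Hh1). pose proof (Cmod_triangle (lam' a b h - RtoC M) (RtoC M)).
    replace (lam' a b h - RtoC M + RtoC M)%C with (lam' a b h) in H0 by ring. rewrite Cmod_RtoC in H0.
    assert (Kl' * Cmod h <= g / 4).
    { apply Rle_trans with ((Kl + Kl' + 1) * (g / (4 * (Kl + Kl' + 1)))).
      apply Rle_trans with ((Kl + Kl' + 1) * Cmod h). nra. apply Rmult_le_compat_l; lra. right; field; lra. }
    lra. }
  assert (Hlnz : lam a b h <> RtoC 0). { intro E. rewrite E, Cmod_0 in Hlam. unfold g in Hlam. pose proof (Rabs_pos M). lra. }
  assert (Hcl : c0 a b / 2 <= Cmod (cc a b h)) by (apply Hlowc; lra).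
  assert (Hcnz : cc a b h <> RtoC 0). { intro E. rewrite E, Cmod_0 in Hcl. lra. }
  split. { apply Zc_closed; auto. }
  split.
  {
    assert (Hwnz : wC a b h <> RtoC 0). { intro E. pose proof (Hwlow h ltac:(lra)). rewrite E, Cmod_0 in H. lra. }
    replace (lam a b h / wC a b h - 1)%C with (- (wC a b h - lam a b h) / wC a b h)%C by (field; auto).
    rewrite Cmod_div, Cmod_opp by auto. pose proof (Hlw h Hh1). pose proof (Hwlow h ltac:(lra)).
    apply Rle_trans with ((2 / s * KQ a b * Cmod h ^ 4) * / (L * exp (- Sw))).
    - unfold Rdiv. apply Rmult_le_compat. apply Cmod_ge_0. left; apply Rinv_0_lt_compat; lra. exact H.
      apply Rinv_le_contravar; auto.
    - right. unfold Ce. field. repeat split; apply Rgt_not_eq; unfold Rgt; first [lra | apply exp_pos]. }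
  split.
  { replace (cc a b h / RtoC (c0 a b) - 1)%C with ((cc a b h - RtoC (c0 a b)) / RtoC (c0 a b))%C.
    2: { field. intro E. apply (f_equal fst) in E. simpl in E. lra. }
    rewrite Cmod_div, Cmod_RtoC, Rabs_pos_eq by (lra || (intro E; apply (f_equal fst) in E; simpl in E; lra)).
    pose proof (Hc h Hh2). unfold Rdiv. replace (Kc * / c0 a b * Cmod h) with (Kc * Cmod h * / c0 a b) by ring.
    apply Rmult_le_compat_r. apply Rlt_le, Rinv_0_lt_compat; lra. auto. }
  split.
  { rewrite Cmod_div by auto. pose proof (HBc' h Hh2). unfold Rdiv. apply Rmult_le_compat; auto. apply Cmod_ge_0.
    apply Rlt_le, Rinv_0_lt_compat. apply Rlt_le_trans with (c0 a b / 2); lra.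
    apply Rinv_le_contravar; lra. }
  split.
  { pose proof (Rabs_pos M). rewrite Cmod_div by auto. unfold rho, Rdiv. apply Rmult_le_compat; auto. apply Cmod_ge_0.
    apply Rlt_le, Rinv_0_lt_compat. unfold g in *; lra. apply Rinv_le_contravar; auto. unfold g in *; lra. }
  split; auto.
Qed.

Lemma mul_close (x y : C) e1 e2 : Cmod (x - 1)%C <= e1 -> Cmod (y - 1)%C <= e2 -> Cmod (x * y - 1)%C <= e1 + e2 + e1 * e2.
Proof. intros H1 H2. replace (x * y - 1)%C with ((x - 1) + (y - 1) + (x - 1) * (y - 1))%C by ring.
  eapply Rle_trans. apply Cmod_tri3. rewrite Cmod_mult. pose proof (Cmod_ge_0 (x - 1)%C). pose proof (Cmod_ge_0 (y - 1)%C).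
  assert (Cmod (x - 1) * Cmod (y - 1) <= e1 * e2) by (apply Rmult_le_compat; auto). lra. Qed.

Lemma pow_close (x : C) e m : Cmod (x - 1)%C <= e -> Cmod (Cpow x m - 1)%C <= (1 + e) ^ m - 1.
Proof. intros H. pose proof (Cmod_ge_0 (x - 1)%C). induction m; simpl.
  - replace (1 - 1)%C with (RtoC 0) by ring. rewrite Cmod_0. lra.
  - replace (x * Cpow x m - 1)%C with (x * (Cpow x m - 1) + (x - 1))%C by ring.
    eapply Rle_trans. apply Cmod_triangle. rewrite Cmod_mult.
    assert (Cmod x <= 1 + e). { replace x with ((x - 1) + 1)%C by ring. eapply Rle_trans. apply Cmod_triangle. rewrite Cmod_1. lra. }
    pose proof (Cmod_ge_0 (Cpow x m - 1)%C). pose proof (Cmod_ge_0 x).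
    assert (Cmod x * Cmod (Cpow x m - 1) <= (1 + e) * ((1 + e) ^ m - 1)) by (apply Rmult_le_compat; auto).
    lra. Qed.

Lemma bern_aux t m : 0 <= t -> (1 + t) ^ m * (1 - INR m * t) <= 1.
Proof. intros Ht. induction m. simpl. lra.
  rewrite S_INR. simpl. pose proof (pow_le (1 + t) m ltac:(lra)).
  assert ((1 + t) ^ m * (1 + t) * (1 - (INR m + 1) * t) = (1 + t) ^ m * (1 - INR m * t) - (1 + t) ^ m * ((INR m + 1) * t * t)) by ring.
  assert (0 <= (1 + t) ^ m * ((INR m + 1) * t * t)). { apply Rmult_le_pos; auto. pose proof (pos_INR m). apply Rmult_le_pos; nra. }
  nra. Qed.

Lemma bern t m : 0 <= t -> INR m * t <= 1/2 -> (1 + t) ^ m - 1 <= 2 * INR m * t.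
Proof. intros Ht Hm. pose proof (bern_aux t m Ht). pose proof (pow_le (1 + t) m ltac:(lra)). pose proof (pos_INR m).
  assert (0 <= INR m * t) by nra.
  assert ((1 + t) ^ m - 1 <= INR m * t * (1 + t) ^ m) by nra.
  assert ((1 + t) ^ m <= 2). { nra. }
  nra. Qed.

Lemma inv_close (r : C) : Cmod r <= 1/2 -> Cmod (/ (1 + r) - 1)%C <= 2 * Cmod r.
Proof. intros H. assert (Hl : 1/2 <= Cmod (1 + r)%C).
  { pose proof (Cmod_triangle (1 + r) (- r))%C. replace (1 + r + - r)%C with (RtoC 1) in H0 by ring.
    rewrite Cmod_1, Cmod_opp in H0. lra. }
  assert (Hnz : (1 + r)%C <> RtoC 0). { intro E. rewrite E, Cmod_0 in Hl. lra. }
  replace (/ (1 + r) - 1)%C with (- r / (1 + r))%C by (field; auto).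
  rewrite Cmod_div, Cmod_opp by auto. pose proof (Cmod_ge_0 r).
  apply Rle_trans with (Cmod r / (1/2)). unfold Rdiv. apply Rmult_le_compat_l; auto. apply Rinv_le_contravar; lra.
  right; field. Qed.

Lemma ce_pow (v : C) m : Cpow (ce v) m = ce (RtoC (INR m) * v)%C.
Proof. induction m. simpl. replace (RtoC 0 * v)%C with (RtoC 0) by ring. rewrite ce0. reflexivity.
  rewrite Cpow_S, IHm, <- ce_add. f_equal. rewrite S_INR, RtoC_plus. ring. Qed.

Lemma Cpow_div (x y : C) m : y <> RtoC 0 -> Cpow (x / y)%C m = (Cpow x m / Cpow y m)%C.
Proof. intros Hy. unfold Cdiv. rewrite Cpow_mult_l, Cpow_inv; auto. Qed.

Lemma geom_small (q e : R) : 0 <= q < 1 -> 0 < e -> exists N, forall m, (N <= m)%nat -> q ^ m <= e.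
Proof. intros Hq He. destruct (pow_lt_1_zero q ltac:(rewrite Rabs_pos_eq; lra) e He) as [N HN].
  exists N. intros m Hm. pose proof (HN m Hm). rewrite Rabs_pos_eq in H. lra. apply pow_le; lra. Qed.

Lemma cn_pos n : 0 < cube_root_n n.
Proof. unfold cube_root_n, Rpower. apply exp_pos. Qed.

Lemma cn_cube n : (0 < n)%nat -> cube_root_n n * cube_root_n n * cube_root_n n = INR n.
Proof. intros Hn. unfold cube_root_n. rewrite <- !Rpower_plus. replace (1/3 + 1/3 + 1/3) with 1 by field.
  apply Rpower_1. apply lt_0_INR; auto. Qed.

Lemma cn_large (T : R) : exists N, forall n, (N <= n)%nat -> T <= cube_root_n n.
Proof. destruct (INR_unbounded (Rabs T * Rabs T * Rabs T)) as [N HN]. exists (S N). intros n Hn.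
  assert (HT : Rabs T * Rabs T * Rabs T < INR n). { apply Rlt_le_trans with (INR N). auto. apply le_INR; lia. }
  rewrite <- cn_cube in HT by lia. pose proof (cn_pos n). pose proof (Rabs_pos T). pose proof (Rle_abs T).
  destruct (Rle_or_lt (Rabs T) (cube_root_n n)). lra.
  assert (cube_root_n n * cube_root_n n * cube_root_n n < Rabs T * Rabs T * Rabs T).
  { apply Rmult_le_0_lt_compat. nra. lra. apply Rmult_le_0_lt_compat; lra. auto. }
  lra. Qed.

Lemma Cscale_eq r (w : C) : Cscale r w = (RtoC r * w)%C.
Proof. apply ceq; simpl; ring. Qed.

Lemma Cscale_Cexp r v : Cscale (exp r) (Cexp v) = ce (RtoC r + v)%C.
Proof. unfold ce, Cexp, Cscale. simpl. rewrite exp_plus, Rplus_0_l. apply ceq; simpl; ring. Qed.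

Lemma fold_fsum (F : list bool -> C) l : fold_right Cadd C0 (map F l) = fsum F l.
Proof. unfold fsum. induction l; simpl. reflexivity. rewrite IHl. reflexivity. Qed.

Lemma modG_form a b m z :
  let cn := cube_root_n (S m) in
  modG_seq a b (S m) z = (/ RtoC (ising_Z a b (S m)) * (ce (RtoC (- INR (S m) * mm a b / cn) * z)
      * Zc b (S m) (RtoC a + RtoC (/ cn) * z)) * ce (RtoC (- t_n a b (S m) / 2) * (z * z)))%C.
Proof.
  intros cn. pose proof (cn_pos (S m)) as Hcn. fold cn in Hcn. pose proof (ising_Z_pos a b (S m)) as HZ.
  unfold modG_seq, ising_E. rewrite Cscale_eq, RtoC_inv by lra. rewrite fold_fsum.
  change (Cmul ?x ?y) with (Cmult x y).
  f_equal.
  - f_equal. unfold Zc. rewrite <- fsum_scal. apply fsum_ext. intros s.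
    unfold ising_weight. rewrite Cscale_Cexp. unfold wt. rewrite <- ce_add. f_equal.
    unfold X_n. fold cn. rewrite Cscale_eq. unfold mm. apply ceq; simpl; field; lra.
  - unfold Cexp. fold (ce (Cscale (- t_n a b (S m) / 2) (Cmul z z))). rewrite Cscale_eq. reflexivity.
Qed.

Lemma RtoC_div (x y : R) : y <> 0 -> RtoC (x / y) = (RtoC x / RtoC y)%C.
Proof. intros. apply ceq; simpl; field; auto. Qed.

Lemma real_closed a b m : RtoC (ising_Z a b (S m)) =
  (RtoC (c0 a b) * Cpow (RtoC (LL a b)) m + RtoC (c0' a b) * Cpow (RtoC (MM a b)) m)%C.
Proof.
  rewrite <- Zc_real.
  assert (HLM : (RtoC (LL a b) - RtoC (MM a b))%C <> RtoC 0).
  { intro E. apply (f_equal fst) in E. simpl in E. pose proof (LmM a b). pose proof (ss_pos a b). lra. }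
  rewrite (closed_form (fun n => Zc b n (RtoC a)) (tauc b (RtoC a)) (delc b) (RtoC (LL a b)) (RtoC (MM a b))).
  - rewrite !Zc_real. unfold c0, c0'. pose proof (LmM a b). pose proof (ss_pos a b).
    rewrite !RtoC_div, !RtoC_minus, !RtoC_mult by lra. reflexivity.
  - intros n. apply Zc_rec.
  - unfold tauc. replace (- RtoC a)%C with (RtoC (- a)) by (apply ceq; simpl; ring). rewrite !ce_R.
    pose proof (I0 a b). unfold EE in H. apply ceq; simpl; lra.
  - rewrite <- RtoC_mult, (LM_del a b). reflexivity.
  - auto.
Qed.

Lemma psi_eq a b z : psi a b z = ce (RtoC (kap a b / 6) * z * z * z)%C.
Proof. unfold psi, ce. f_equal. unfold kap. apply ceq; simpl; field. Qed.

Lemma Cmod_psi a b z R0 : Cmod z <= R0 -> Cmod (psi a b z) <= exp (Rabs (kap a b / 6) * R0 ^ 3).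
Proof. intros H. rewrite psi_eq. eapply Rle_trans. apply Cmod_ce_le.
  rewrite !Cmod_mult, Cmod_RtoC. pose proof (Cmod_ge_0 z). pose proof (Rabs_pos (kap a b / 6)).
  assert (Cmod z * Cmod z * Cmod z <= R0 ^ 3).
  { assert (Cmod z * Cmod z <= R0 * R0) by (apply Rmult_le_compat; lra).
    replace (R0 ^ 3) with ((R0 * R0) * R0) by ring. apply Rmult_le_compat; try lra. apply Rmult_le_pos; lra. }
  destruct (Rle_lt_or_eq_dec (Rabs (kap a b / 6) * Cmod z * Cmod z * Cmod z) (Rabs (kap a b / 6) * R0 ^ 3)).
  replace (Rabs (kap a b / 6) * Cmod z * Cmod z * Cmod z) with (Rabs (kap a b / 6) * (Cmod z * Cmod z * Cmod z)) by ring.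
  apply Rmult_le_compat_l; auto.
  left; apply exp_increasing; auto. rewrite e; lra.
Qed.

Lemma chain5 (A1 A2 A3 A4 A5 : C) e : 0 <= e <= 1 ->
  Cmod (A1 - 1)%C <= e -> Cmod (A2 - 1)%C <= e -> Cmod (A3 - 1)%C <= e -> Cmod (A4 - 1)%C <= e -> Cmod (A5 - 1)%C <= e ->
  Cmod (A1 * A2 * A3 * A4 * A5 - 1)%C <= 31 * e.
Proof. intros He H1 H2 H3 H4 H5.
  pose proof (mul_close _ _ _ _ H1 H2) as M2.
  assert (M2' : Cmod (A1 * A2 - 1)%C <= 3 * e) by nra.
  pose proof (mul_close _ _ _ _ M2' H3) as M3.
  assert (M3' : Cmod (A1 * A2 * A3 - 1)%C <= 7 * e) by nra.
  pose proof (mul_close _ _ _ _ M3' H4) as M4.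
  assert (M4' : Cmod (A1 * A2 * A3 * A4 - 1)%C <= 15 * e) by nra.
  pose proof (mul_close _ _ _ _ M4' H5) as M5. nra. Qed.

Lemma ML_lt a b : Rabs (MM a b) < LL a b.
Proof. unfold MM, LL. pose proof (EE_pos b). pose proof (ch_pos a). pose proof (ss_pos a b).
  assert (0 < EE b * ch a) by (apply Rmult_lt_0_compat; lra). apply Rabs_def1; lra. Qed.

Lemma ident (Zr Zn K Q X Y psiv c c' lmm lm'm Lm Mm c0v c0v' A : C) :
  Zr = (c0v * Lm + c0v' * Mm)%C -> Zn = (c * lmm + c' * lm'm)%C -> lmm = (A * (Lm * X))%C ->
  (X * K * Q)%C = (psiv * Y)%C ->
  c0v <> RtoC 0 -> Lm <> RtoC 0 -> c <> RtoC 0 -> A <> RtoC 0 -> X <> RtoC 0 -> Zr <> RtoC 0 ->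
  (/ Zr * (K * Zn) * Q)%C = (psiv * (c / c0v * A * Y * (1 + c' / c * (lm'm / lmm)) * / (1 + c0v' / c0v * (Mm / Lm))))%C.
Proof.
  intros HZr HZ HA Hexp H1 H2 H3 H4 H5 H6.
  subst Zn. subst lmm. subst Zr.
  transitivity ((c / c0v * A * (1 + c' / c * (lm'm / (A * (Lm * X)))) * / (1 + c0v' / c0v * (Mm / Lm))) * (X * K * Q))%C.
  - field. repeat split; auto.
  - rewrite Hexp. field. repeat split; auto.
Qed.

Theorem theorem2p1 (alpha beta : R) (hbeta : 0 <= beta) :
  forall (Rad eps : R), 0 < eps ->
  exists N : nat, forall n : nat, (N <= n)%nat ->
    forall z : Cx, Cnorm z <= Rad ->
      Cnorm (Csub (modG_seq alpha beta n z) (psi alpha beta z)) < eps.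
Proof.
  intros Rad eps Heps.
  destruct (key alpha beta) as [r [Ce [Kc [B [rho [Hr [Hr1 [HCe [HKc [HB [Hrho Hkey]]]]]]]]]]].
  set (R0 := Rabs Rad + 1).
  assert (HR0 : 0 < R0) by (unfold R0; pose proof (Rabs_pos Rad); lra).
  set (P := exp (Rabs (kap alpha beta / 6) * R0 ^ 3)).
  assert (HP : 0 < P) by apply exp_pos.
  set (eta := Rmin 1 (eps / (32 * P))).
  assert (Heta : 0 < eta) by (apply Rmin_glb_lt; [lra | apply Rdiv_lt_0_compat; lra]).
  assert (Heta1 : eta <= 1) by apply Rmin_l.
  assert (Heta2 : eta <= eps / (32 * P)) by apply Rmin_r.
  set (Sw := Sq (c1u alpha beta) (c2u alpha beta) (c3u alpha beta)).
  pose proof (Sq_ge0 (c1u alpha beta) (c2u alpha beta) (c3u alpha beta)) as HSw. fold Sw in HSw.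
  assert (HSe : 0 <= Sw * exp Sw) by (apply Rmult_le_pos; [lra | left; apply exp_pos]).
  set (delta := Rmin r (Rmin (eta / (Kc + 1)) (eta / (Sw * exp Sw + 1)))).
  assert (Hd0 : 0 < delta).
  { apply Rmin_glb_lt. lra. apply Rmin_glb_lt; apply Rdiv_lt_0_compat; lra. }
  assert (Hd1 : delta <= r) by apply Rmin_l.
  assert (Hd2 : delta <= eta / (Kc + 1)) by (eapply Rle_trans; [apply Rmin_r | apply Rmin_l]).
  assert (Hd3 : delta <= eta / (Sw * exp Sw + 1)) by (eapply Rle_trans; [apply Rmin_r | apply Rmin_r]).
  assert (HCR : 0 <= Ce * R0 ^ 4) by (apply Rmult_le_pos; [lra | apply pow_le; lra]).
  destruct (cn_large (R0 / delta + 2 * (Ce * R0 ^ 4) / eta + 1)) as [N1 HN1].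
  destruct (geom_small rho (eta / (B + 1)) Hrho) as [N2 HN2]. { apply Rdiv_lt_0_compat; lra. }
  set (q0 := Rabs (MM alpha beta) / LL alpha beta).
  pose proof (LL_pos alpha beta) as HL. pose proof (ML_lt alpha beta) as HML.
  assert (Hq0 : 0 <= q0 < 1).
  { unfold q0. split. apply Rmult_le_pos. apply Rabs_pos. left; apply Rinv_0_lt_compat; lra.
    apply Rmult_lt_reg_r with (LL alpha beta). lra. unfold Rdiv. rewrite Rmult_assoc, Rinv_l, Rmult_1_r; lra. }
  set (cr := Rabs (c0' alpha beta / c0 alpha beta)).
  assert (Hcr : 0 <= cr) by apply Rabs_pos.
  destruct (geom_small q0 (eta / (2 * (cr + 1))) Hq0) as [N3 HN3]. { apply Rdiv_lt_0_compat; lra. }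
  exists (Nat.max N1 (Nat.max (S N2) (S N3))).
  intros n Hn z Hz.
  destruct n as [|m]. { lia. }
  assert (Hm2 : (N2 <= m)%nat) by lia. assert (Hm3 : (N3 <= m)%nat) by lia. assert (Hn1 : (N1 <= S m)%nat) by lia.
  pose proof (HN1 _ Hn1) as Hcn. pose proof (cn_pos (S m)) as Hcn0. pose proof (cn_cube (S m) ltac:(lia)) as Hcube.
  set (cn := cube_root_n (S m)) in *.
  change (Cnorm z) with (Cmod z) in Hz.
  change (Cnorm (Csub ?X ?Y)) with (Cmod (X - Y)%C).
  set (h := (RtoC (/ cn) * z)%C).
  assert (Hzb : Cmod z <= R0) by (unfold R0; pose proof (Rle_abs Rad); lra).
  assert (Hhz : Cmod h = Cmod z / cn).
  { unfold h. rewrite Cmod_mult, Cmod_RtoC, Rabs_pos_eq. field; lra. left; apply Rinv_0_lt_compat; lra. }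
  assert (HhR : Cmod h <= R0 / cn).
  { rewrite Hhz. unfold Rdiv. apply Rmult_le_compat_r. left; apply Rinv_0_lt_compat; lra. auto. }
  assert (Hcn1 : R0 / delta <= cn).
  { assert (0 <= 2 * (Ce * R0 ^ 4) / eta) by (apply Rmult_le_pos; [lra | left; apply Rinv_0_lt_compat; lra]). lra. }
  assert (Hdc : R0 / cn <= delta).
  { apply (Rmult_le_reg_r cn). lra. unfold Rdiv. rewrite Rmult_assoc, Rinv_l, Rmult_1_r by lra.
    apply (Rmult_le_reg_r (/ delta)). apply Rinv_0_lt_compat; lra.
    replace (delta * cn * / delta) with cn by (field; lra). auto. }
  assert (Hh : Cmod h <= delta) by lra.
  pose proof (Cmod_ge_0 h) as Hh0.
  destruct (Hkey h ltac:(lra)) as [Hcl [Heps' [Hc [Hc' [Hrat [Hlnz Hcnz]]]]]].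

  set (lm := lam alpha beta h) in *. set (lm' := lam' alpha beta h) in *.
  set (c := cc alpha beta h) in *. set (c' := cc' alpha beta h) in *.
  set (w := wC alpha beta h) in *. set (u := uC alpha beta h).
  set (L := LL alpha beta) in *. set (M := MM alpha beta) in *.
  set (c0v := c0 alpha beta) in *. set (c0v' := c0' alpha beta) in *.
  pose proof (c0_pos alpha beta) as Hc0. fold c0v in Hc0.
  assert (Hwnz : w <> RtoC 0).
  { unfold w, wC. apply Cmult_neq_0. intro E; apply (f_equal fst) in E; change (LL alpha beta = 0) in E; fold L in E; lra. apply ce_neq0. }
  set (r0 := (RtoC (c0v' / c0v) * Cpow (RtoC (M / L)) m)%C).
  set (r1 := (c' / c * Cpow (lm' / lm) m)%C).
  set (Pi := (c / RtoC c0v * Cpow (lm / w) m * ce (- u) * (1 + r1) * / (1 + r0))%C).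
  assert (Hr0 : Cmod r0 <= eta / 2).
  { unfold r0. rewrite Cmod_mult, Cmod_pow, !Cmod_RtoC. fold cr.
    replace (Rabs (M / L)) with q0 by (unfold q0, Rdiv; rewrite Rabs_mult, Rabs_inv, (Rabs_pos_eq L) by lra; reflexivity).
    pose proof (HN3 m Hm3). apply Rle_trans with (cr * (eta / (2 * (cr + 1)))).
    apply Rmult_le_compat_l; auto.
    apply Rle_trans with (eta / 2 * (cr / (cr + 1))). right; field; lra.
    rewrite <- (Rmult_1_r (eta / 2)) at 2. apply Rmult_le_compat_l. lra.
    apply (Rmult_le_reg_r (cr + 1)). lra. unfold Rdiv. rewrite Rmult_assoc, Rinv_l; lra. }
  assert (Hmain : modG_seq alpha beta (S m) z = (psi alpha beta z * Pi)%C).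
  { pose proof (modG_form alpha beta m z) as MF. cbv zeta in MF. change (cube_root_n (S m)) with cn in MF. fold h in MF.
    rewrite MF.
    assert (HLnz : RtoC L <> RtoC 0) by (intro E; apply (f_equal fst) in E; change (L = 0) in E; lra).
    assert (HA : Cpow lm m = (Cpow (lm / w) m * (Cpow (RtoC L) m * ce (RtoC (INR m) * u)))%C).
    { rewrite <- ce_pow, <- !Cpow_mult_l. f_equal. unfold w, wC. fold u L. field. split; auto. apply ce_neq0. }
    assert (Hexp : (ce (RtoC (INR m) * u) * ce (RtoC (- INR (S m) * mm alpha beta / cn) * z) * ce (RtoC (- t_n alpha beta (S m) / 2) * (z * z)))%C = (psi alpha beta z * ce (- u))%C).
    { rewrite psi_eq, <- !ce_add. f_equal. unfold u, uC, h, c1u, c2u, c3u.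
      replace (t_n alpha beta (S m)) with (cn * sgm alpha beta) by reflexivity.
      rewrite S_INR in *. replace (INR m) with (cn * cn * cn - 1) by lra. destruct z as [x y]. apply ceq; simpl; field; lra. }
    unfold Pi, r1, r0. rewrite (Cpow_div lm' lm m Hlnz). rewrite (RtoC_div c0v' c0v) by lra.
    rewrite (RtoC_div M L) by lra. rewrite (Cpow_div (RtoC M) (RtoC L) m HLnz).
    apply (ident _ _ _ _ (ce (RtoC (INR m) * u))).
    - apply real_closed.
    - apply Hcl.
    - apply HA.
    - apply Hexp.
    - intro E; apply (f_equal fst) in E; change (c0v = 0) in E; lra.
    - apply Cpow_nz; auto.
    - auto.
    - apply Cpow_nz. intro E. assert (lm = (lm / w) * w)%C by (field; auto). rewrite E, Cmult_0_l in H. auto.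
    - apply ce_neq0.
    - intro E; apply (f_equal fst) in E; simpl in E. pose proof (ising_Z_pos alpha beta (S m)). lra. }
  rewrite Hmain. replace (psi alpha beta z * Pi - psi alpha beta z)%C with (psi alpha beta z * (Pi - 1))%C by ring.
  rewrite Cmod_mult.
  assert (HPi : Cmod (Pi - 1)%C <= 31 * eta).
  { unfold Pi. apply chain5. lra.
    -
      eapply Rle_trans. apply Hc. apply Rle_trans with (Kc * delta). apply Rmult_le_compat_l; lra.
      apply Rle_trans with (Kc * (eta / (Kc + 1))). apply Rmult_le_compat_l; lra.
      apply Rle_trans with (eta * (Kc / (Kc + 1))). right; field; lra.
      rewrite <- (Rmult_1_r eta) at 2. apply Rmult_le_compat_l. lra.
      apply (Rmult_le_reg_r (Kc + 1)). lra. unfold Rdiv. rewrite Rmult_assoc, Rinv_l; lra.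
    -
      eapply Rle_trans. apply pow_close. apply Heps'.
      assert (Hh4 : Cmod h ^ 4 <= (R0 / cn) ^ 4) by (apply pow_incr; lra).
      assert (Hmi : INR m <= cn * cn * cn) by (rewrite Hcube, S_INR; lra).
      assert (Hkey1 : INR m * (Ce * Cmod h ^ 4) <= Ce * R0 ^ 4 / cn).
      { apply Rle_trans with ((cn * cn * cn) * (Ce * (R0 / cn) ^ 4)).
        apply Rmult_le_compat. apply pos_INR. apply Rmult_le_pos; auto. apply pow_le; auto. auto.
        apply Rmult_le_compat_l; auto.
        right. field. lra. }
      assert (Hkey2 : Ce * R0 ^ 4 / cn <= eta / 2).
      { apply (Rmult_le_reg_r cn). lra. unfold Rdiv at 1. rewrite Rmult_assoc, Rinv_l, Rmult_1_r by lra.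
        assert (2 * (Ce * R0 ^ 4) / eta <= cn).
        { assert (0 <= R0 / delta) by (apply Rmult_le_pos; [lra | left; apply Rinv_0_lt_compat; lra]). lra. }
        apply (Rmult_le_reg_r (2 / eta)). apply Rdiv_lt_0_compat; lra.
        replace (Ce * R0 ^ 4 * (2 / eta)) with (2 * (Ce * R0 ^ 4) / eta) by (field; lra).
        replace (eta / 2 * cn * (2 / eta)) with cn by (field; lra). auto. }
      assert (0 <= Ce * Cmod h ^ 4) by (apply Rmult_le_pos; auto; apply pow_le; auto).
      eapply Rle_trans. apply bern; auto. lra.
      lra.
    -
      eapply Rle_trans. apply ce_taylor1. rewrite Cmod_opp.
      pose proof (uC_bound alpha beta h ltac:(lra)) as Hu. fold u Sw in Hu.
      pose proof (Cmod_ge_0 u).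
      assert (exp (Cmod u) <= exp Sw).
      { destruct (Rle_lt_or_eq_dec (Cmod u) Sw). nra. left; apply exp_increasing; auto. rewrite e; lra. }
      apply Rle_trans with (Sw * delta * exp Sw).
      { apply Rmult_le_compat; auto. left; apply exp_pos. apply Rle_trans with (Sw * Cmod h); auto. apply Rmult_le_compat_l; lra. }
      apply Rle_trans with (Sw * exp Sw * (eta / (Sw * exp Sw + 1))).
      { replace (Sw * delta * exp Sw) with (Sw * exp Sw * delta) by ring. apply Rmult_le_compat_l; auto. }
      apply Rle_trans with (eta * (Sw * exp Sw / (Sw * exp Sw + 1))). right; field; lra.
      rewrite <- (Rmult_1_r eta) at 2. apply Rmult_le_compat_l. lra.
      apply (Rmult_le_reg_r (Sw * exp Sw + 1)). lra. unfold Rdiv. rewrite Rmult_assoc, Rinv_l; lra.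
    -
      replace (1 + r1 - 1)%C with r1 by ring. unfold r1. rewrite Cmod_mult, Cmod_pow.
      pose proof (HN2 m Hm2). pose proof (Cmod_ge_0 (lm' / lm)%C).
      assert (Cmod (lm' / lm) ^ m <= rho ^ m) by (apply pow_incr; lra).
      apply Rle_trans with (B * (eta / (B + 1))).
      apply Rmult_le_compat; auto. apply Cmod_ge_0. apply pow_le; auto. lra.
      apply Rle_trans with (eta * (B / (B + 1))). right; field; lra.
      rewrite <- (Rmult_1_r eta) at 2. apply Rmult_le_compat_l. lra.
      apply (Rmult_le_reg_r (B + 1)). lra. unfold Rdiv. rewrite Rmult_assoc, Rinv_l; lra.
    -
      eapply Rle_trans. apply inv_close. lra. lra. }
  pose proof (Cmod_psi alpha beta z R0 Hzb) as Hps. fold P in Hps.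
  pose proof (Cmod_ge_0 (Pi - 1)%C).
  apply Rle_lt_trans with (P * (31 * eta)).
  apply Rmult_le_compat; auto. apply Cmod_ge_0.
  apply Rle_lt_trans with (P * (31 * (eps / (32 * P)))).
  apply Rmult_le_compat_l. lra. lra.
  replace (P * (31 * (eps / (32 * P)))) with (31 / 32 * eps) by (field; lra). lra.
Qed.
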